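(* Let $T\in\mathcal B(\mathcal H)$ be such that either $T$ or $T^*$ is quasitriangular. Let $\{P_n\}$ be a filtration with $\|(I-P_n)TP_n\|\to0$ in the first case and with $\|(I-P_n)T^*P_n\|\to0$ in the second case, and put $T_n=P_nT|_{P_n\mathcal H}$. Then $\Psi_{T_n}\to\Psi_T$ uniformly on $\mathbb C$.
   Context: $\mathcal H$ is a complex separable Hilbert space. For an operator $A$, $\Psi_A(z)=0$ for $z\in\sigma(A)$ and $\Psi_A(z)=\|(A-z)^{-1}\|^{-1}$ otherwise. A filtration is a sequence $\{P_n\}$ of finite-rank orthogonal projections with $\operatorname{Ran}P_n\subseteq\operatorname{Ran}P_{n+1}$ and $\bigcup_n\operatorname{Ran}P_n$ dense. $T$ is quasitriangular if there is a filtration $\{P_n\}$ with $\|(I-P_n)TP_n\|\to0$. *)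

(* Defs.v *)
From Stdlib Require Import Reals Lra List Classical ClassicalEpsilon.
Open Scope R_scope.

Record Cx := mkC { Cre : R; Cim : R }.
Definition C0 : Cx := mkC 0 0.
Definition C1 : Cx := mkC 1 0.
Definition Cadd (a b : Cx) : Cx := mkC (Cre a + Cre b) (Cim a + Cim b).
Definition Cmul (a b : Cx) : Cx :=
  mkC (Cre a * Cre b - Cim a * Cim b) (Cre a * Cim b + Cim a * Cre b).
Definition Cconj (a : Cx) : Cx := mkC (Cre a) (- Cim a).

Set Implicit Arguments.
Record HilbertSpace := {
  hcar :> Type;
  vzero : hcar;
  vadd : hcar -> hcar -> hcar;
  vopp : hcar -> hcar;
  vscal : Cx -> hcar -> hcar;
  inner : hcar -> hcar -> Cx;
  vadd_assoc : forall x y z, vadd x (vadd y z) = vadd (vadd x y) z;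
  vadd_comm : forall x y, vadd x y = vadd y x;
  vadd_0 : forall x, vadd vzero x = x;
  vadd_opp : forall x, vadd (vopp x) x = vzero;
  vscal_assoc : forall a b x, vscal a (vscal b x) = vscal (Cmul a b) x;
  vscal_1 : forall x, vscal C1 x = x;
  vscal_addv : forall a x y, vscal a (vadd x y) = vadd (vscal a x) (vscal a y);
  vscal_adds : forall a b x, vscal (Cadd a b) x = vadd (vscal a x) (vscal b x);
  inner_conj : forall x y, inner y x = Cconj (inner x y);
  inner_lin : forall a x y z,
    inner (vadd (vscal a x) y) z = Cadd (Cmul a (inner x z)) (inner y z);
  inner_pos : forall x, 0 <= Cre (inner x x);
  inner_def : forall x, Cre (inner x x) = 0 -> x = vzero
}.

Arguments vzero {h}.
Arguments vadd {h}.
Arguments vopp {h}.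
Arguments vscal {h}.
Arguments inner {h}.

Section HS.
Variable H : HilbertSpace.

Definition vsub (x y : H) : H := vadd x (vopp y).
Definition hnorm (x : H) : R := sqrt (Cre (inner x x)).

Definition complete_space : Prop :=
  forall u : nat -> H,
    (forall eps, eps > 0 -> exists N, forall m n, (m >= N)%nat -> (n >= N)%nat ->
        hnorm (vsub (u m) (u n)) < eps) ->
    exists l : H, Un_cv (fun n => hnorm (vsub (u n) l)) 0.
Definition separable_space : Prop :=
  exists d : nat -> H, forall x eps, eps > 0 -> exists n, hnorm (vsub x (d n)) < eps.

Definition linear_op (A : H -> H) : Prop :=
  (forall x y, A (vadd x y) = vadd (A x) (A y)) /\
  (forall a x, A (vscal a x) = vscal a (A x)).
Definition bounded_op (A : H -> H) : Prop :=
  exists K, forall x, hnorm (A x) <= K * hnorm x.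
Definition is_bounded_operator (A : H -> H) : Prop := linear_op A /\ bounded_op A.
Definition is_adjoint (A B : H -> H) : Prop :=
  forall x y, inner (A x) y = inner x (B y).

(* a classical supremum of a set of reals (0 if not bounded above or empty) *)
Definition Rsup (E : R -> Prop) : R :=
  match excluded_middle_informative (bound E /\ exists x, E x) with
  | left h => proj1_sig (completeness E (proj1 h) (proj2 h))
  | right _ => 0
  end.

Definition opnorm_on (M : H -> Prop) (A : H -> H) : R :=
  Rsup (fun r => exists x, M x /\ hnorm x <= 1 /\ r = hnorm (A x)).
Definition full : H -> Prop := fun _ => True.
Definition opnorm (A : H -> H) : R := opnorm_on full A.

Definition shift (A : H -> H) (z : Cx) : H -> H := fun x => vsub (A x) (vscal z x).

Definition bounded_inverse_on (M : H -> Prop) (B Rinv : H -> H) : Prop :=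
  (forall x, M x -> M (Rinv x)) /\
  (forall x, M x -> Rinv (B x) = x) /\
  (forall x, M x -> B (Rinv x) = x) /\
  (exists K, forall x, M x -> hnorm (Rinv x) <= K * hnorm x).

(* Psi of the operator A|_M : M -> M (A is assumed to leave M invariant):
   0 on the spectrum (no bounded inverse of A - z on M), and
   ||(A|_M - z)^{-1}||^{-1} otherwise. *)
Definition Psi_on (M : H -> Prop) (A : H -> H) (z : Cx) : R :=
  match excluded_middle_informative
          (exists Rinv, bounded_inverse_on M (shift A z) Rinv) with
  | left h => / opnorm_on M (proj1_sig (constructive_indefinite_description _ h))
  | right _ => 0
  end.
Definition Psi (A : H -> H) (z : Cx) : R := Psi_on full A z.

Definition range (P : H -> H) : H -> Prop := fun y => exists x, P x = y.

Definition finite_rank (P : H -> H) : Prop :=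
  exists (k : nat) (e : nat -> H), forall y, range P y ->
    exists c : nat -> Cx,
      y = fold_right (fun i acc => vadd (vscal (c i) (e i)) acc) (vzero) (seq 0 k).
Definition orth_projection (P : H -> H) : Prop :=
  is_bounded_operator P /\ (forall x, P (P x) = P x) /\ is_adjoint P P.

Definition filtration (P : nat -> H -> H) : Prop :=
  (forall n, orth_projection (P n) /\ finite_rank (P n)) /\
  (forall n y, range (P n) y -> range (P (S n)) y) /\
  (forall x eps, eps > 0 -> exists n y, range (P n) y /\ hnorm (vsub x y) < eps).

End HS.

(* Main.v *)
Require Import Defs.
From Stdlib Require Import Reals Lra Lia Psatz List Classical ClassicalEpsilon ZArith.
Import Defs.
Open Scope R_scope.
Arguments vadd_assoc {h}. Arguments vadd_comm {h}. Arguments vadd_0 {h}. Arguments vadd_opp {h}.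
Arguments vscal_assoc {h}. Arguments vscal_1 {h}. Arguments vscal_addv {h}. Arguments vscal_adds {h}.
Arguments inner_conj {h}. Arguments inner_lin {h}. Arguments inner_pos {h}. Arguments inner_def {h}.


Lemma Cx_ext (a b : Cx) : Cre a = Cre b -> Cim a = Cim b -> a = b.
Proof. destruct a, b; simpl; intros -> ->; reflexivity. Qed.

Definition RC (r : R) : Cx := mkC r 0.
Definition Cn2 (a : Cx) : R := Cre a * Cre a + Cim a * Cim a.
Definition Copp (a : Cx) : Cx := mkC (- Cre a) (- Cim a).
Definition Cinv (a : Cx) : Cx := mkC (Cre a / Cn2 a) (- Cim a / Cn2 a).

Lemma Cn2_ge0 a : 0 <= Cn2 a.
Proof. unfold Cn2; nra. Qed.
Lemma Cn2_pos a : a <> C0 -> 0 < Cn2 a.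
Proof. intro h. unfold Cn2. destruct (Req_dec (Cre a) 0), (Req_dec (Cim a) 0).
 - exfalso; apply h; apply Cx_ext; simpl; auto.
 - assert (0 < Cim a * Cim a) by (apply Rsqr_pos_lt; auto). nra.
 - assert (0 < Cre a * Cre a) by (apply Rsqr_pos_lt; auto). nra.
 - assert (0 < Cre a * Cre a) by (apply Rsqr_pos_lt; auto). nra. Qed.
Lemma Cmul_inv a : a <> C0 -> Cmul (Cinv a) a = C1.
Proof. intro h. pose proof (Cn2_pos _ h). unfold Cinv, Cmul, C1; apply Cx_ext; simpl; unfold Cn2 in *; field_simplify; try lra; try field; lra. Qed.

Section HB.
Variable H : HilbertSpace.
Local Notation nrm := (hnorm H).
Local Notation vsubH := (vsub H).

Lemma vadd_0r (x : H) : vadd x vzero = x.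
Proof. rewrite vadd_comm; apply vadd_0. Qed.
Lemma vadd_oppr (x : H) : vadd x (vopp x) = vzero.
Proof. rewrite vadd_comm; apply vadd_opp. Qed.
Lemma vadd_cancel (x y z : H) : vadd x y = vadd x z -> y = z.
Proof. intro e. assert (vadd (vopp x) (vadd x y) = vadd (vopp x) (vadd x z)) by now rewrite e.
 rewrite !vadd_assoc, !vadd_opp, !vadd_0 in H0; auto. Qed.
Lemma vscal_0 (x : H) : vscal C0 x = vzero.
Proof. apply (vadd_cancel (vscal C0 x)). rewrite <- vscal_adds, vadd_0r.
 f_equal; apply Cx_ext; simpl; ring. Qed.
Lemma vscal_zero (a : Cx) : vscal a (@vzero H) = vzero.
Proof. apply (vadd_cancel (vscal a vzero)). rewrite <- vscal_addv, vadd_0, vadd_0r; auto. Qed.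
Lemma vopp_scal (x : H) : vopp x = vscal (RC (-1)) x.
Proof. apply (vadd_cancel x). rewrite vadd_oppr. rewrite <- (vscal_1 x) at 1.
 rewrite <- vscal_adds. replace (Cadd C1 (RC (-1))) with C0. now rewrite vscal_0.
 apply Cx_ext; simpl; ring. Qed.

Lemma inner_addl (x y z : H) : inner (vadd x y) z = Cadd (inner x z) (inner y z).
Proof. rewrite <- (vscal_1 x) at 1. rewrite inner_lin. f_equal. apply Cx_ext; simpl; ring. Qed.
Lemma inner_zl (z : H) : inner vzero z = C0.
Proof. assert (e := inner_addl vzero vzero z). rewrite vadd_0 in e.
 destruct (inner vzero z) as [a b]. unfold Cadd in e; simpl in e. injection e; intros.
 apply Cx_ext; simpl; lra. Qed.
Lemma inner_scall a (x z : H) : inner (vscal a x) z = Cmul a (inner x z).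
Proof. rewrite <- (vadd_0r (vscal a x)). rewrite inner_lin, inner_zl. apply Cx_ext; simpl; ring. Qed.
Lemma inner_addr (x y z : H) : inner z (vadd x y) = Cadd (inner z x) (inner z y).
Proof. rewrite inner_conj, inner_addl. rewrite (inner_conj z x), (inner_conj z y).
 apply Cx_ext; simpl; ring. Qed.
Lemma inner_scalr a (x z : H) : inner z (vscal a x) = Cmul (Cconj a) (inner z x).
Proof. rewrite inner_conj, inner_scall, (inner_conj z x). apply Cx_ext; simpl; ring. Qed.
Lemma inner_zr (z : H) : inner z vzero = C0.
Proof. rewrite inner_conj, inner_zl. apply Cx_ext; simpl; ring. Qed.
Lemma inner_oppl (x z : H) : inner (vopp x) z = Copp (inner x z).
Proof. rewrite vopp_scal, inner_scall. apply Cx_ext; simpl; ring. Qed.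
Lemma inner_oppr (x z : H) : inner z (vopp x) = Copp (inner z x).
Proof. rewrite vopp_scal, inner_scalr. apply Cx_ext; simpl; ring. Qed.
Lemma inner_self_im (x : H) : Cim (inner x x) = 0.
Proof. assert (e := inner_conj x x). destruct (inner x x) as [a b]. unfold Cconj in e; simpl in *.
 injection e; intros; lra. Qed.
Lemma Re_inner_sym (x y : H) : Cre (inner y x) = Cre (inner x y).
Proof. rewrite inner_conj; reflexivity. Qed.

Lemma hnorm_ge0 (x : H) : 0 <= nrm x.
Proof. apply sqrt_pos. Qed.
Lemma hnorm_sq (x : H) : nrm x * nrm x = Cre (inner x x).
Proof. apply sqrt_sqrt, inner_pos. Qed.
Lemma hnorm_zero : nrm (@vzero H) = 0.
Proof. unfold hnorm. rewrite inner_zl. simpl. apply sqrt_0. Qed.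
Lemma hnorm_eq0 (x : H) : nrm x = 0 -> x = vzero.
Proof. intro e. apply inner_def. rewrite <- hnorm_sq, e; ring. Qed.
Lemma sq_le_sq (a b : R) : 0 <= b -> a * a <= b * b -> a <= b.
Proof. intros. destruct (Rle_dec a b); auto. nra. Qed.
Lemma sq_eq (a b : R) : 0 <= a -> 0 <= b -> a * a = b * b -> a = b.
Proof. intros. nra. Qed.

Lemma inner_scal2 a (x : H) : Cre (inner (vscal a x) (vscal a x)) = Cn2 a * Cre (inner x x).
Proof. rewrite inner_scall, inner_scalr. pose proof (inner_self_im x).
 destruct (inner x x) as [p q]; simpl in *. unfold Cn2; subst; ring. Qed.
Definition Cabs (a : Cx) := sqrt (Cn2 a).
Lemma hnorm_scal a (x : H) : nrm (vscal a x) = Cabs a * nrm x.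
Proof. unfold hnorm, Cabs. rewrite inner_scal2. apply sqrt_mult_alt, Cn2_ge0. Qed.
Lemma hnorm_scalR r (x : H) : nrm (vscal (RC r) x) = Rabs r * nrm x.
Proof. rewrite hnorm_scal. f_equal. unfold Cabs, Cn2; simpl. rewrite Rmult_0_l, Rplus_0_r.
 apply sqrt_Rsqr_abs. Qed.
Lemma hnorm_opp (x : H) : nrm (vopp x) = nrm x.
Proof. rewrite vopp_scal, hnorm_scalR. replace (Rabs (-1)) with 1 by (rewrite Rabs_left; lra). ring. Qed.

Lemma expand_sub (x y : H) (w : Cx) :
  Cre (inner (vsub H x (vscal w y)) (vsub H x (vscal w y))) =
  Cre (inner x x) - 2 * Cre (Cmul (Cconj w) (inner x y)) + Cn2 w * Cre (inner y y).
Proof. unfold vsub. rewrite inner_addl, !inner_addr, !inner_oppl, !inner_oppr, inner_scall, !inner_scalr, inner_scall.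
 rewrite (inner_conj y x). pose proof (inner_self_im y). destruct (inner y y) as [p q]; destruct (inner x y) as [u v].
 simpl in *; subst. unfold Cn2. ring. Qed.

Lemma CS_sq (x y : H) : Cn2 (inner x y) <= Cre (inner x x) * Cre (inner y y).
Proof. destruct (Req_dec (Cre (inner y y)) 0) as [e|ne].
 - apply inner_def in e. subst. rewrite inner_zr. unfold Cn2; simpl. rewrite e0 || idtac. rewrite inner_zl; simpl. nra.
 - pose proof (inner_pos y). assert (py : 0 < Cre (inner y y)) by lra.
   set (c := inner x y). set (w := Cmul (RC (/ Cre (inner y y))) c).
   pose proof (inner_pos (vsub H x (vscal w y))). rewrite expand_sub in H1.
   unfold w in H1. fold c in H1. unfold Cn2 in *. destruct c as [c1 c2]. simpl in H1.
   set (Y := Cre (inner y y)) in *. set (X := Cre (inner x x)) in *.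
   assert (e1 : Y * (X - 2 * ((/Y * c1 + 0 * c2) * c1 - - (/Y * c2 + 0 * c1) * c2) + ((/Y * c1 - 0 * c2) * (/Y * c1 - 0 * c2) + (/Y * c2 + 0 * c1) * (/Y * c2 + 0 * c1)) * Y) = X * Y - (c1*c1 + c2*c2)).
   { field. lra. }
   simpl. nra. Qed.

Lemma CS_re (x y : H) : Cre (inner x y) <= nrm x * nrm y.
Proof. pose proof (CS_sq x y). rewrite <- !hnorm_sq in H0.
 apply sq_le_sq. pose proof (hnorm_ge0 x); pose proof (hnorm_ge0 y); nra.
 unfold Cn2 in H0. nra. Qed.
Lemma CS_abs (x y : H) : Cabs (inner x y) <= nrm x * nrm y.
Proof. pose proof (CS_sq x y). rewrite <- !hnorm_sq in H0. unfold Cabs.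
 apply sq_le_sq. pose proof (hnorm_ge0 x); pose proof (hnorm_ge0 y); nra.
 rewrite sqrt_sqrt by apply Cn2_ge0. nra. Qed.
Lemma expand_add (x y : H) : Cre (inner (vadd x y) (vadd x y)) = Cre (inner x x) + 2 * Cre (inner x y) + Cre (inner y y).
Proof. rewrite inner_addl, !inner_addr. simpl. rewrite (Re_inner_sym x y). ring. Qed.
Lemma hnorm_tri (x y : H) : nrm (vadd x y) <= nrm x + nrm y.
Proof. apply sq_le_sq. pose proof (hnorm_ge0 x); pose proof (hnorm_ge0 y); lra.
 rewrite hnorm_sq, expand_add, <- !hnorm_sq. pose proof (CS_re x y). nra. Qed.
Lemma vsub_self (x : H) : vsubH x x = vzero.
Proof. apply vadd_oppr. Qed.
Lemma vsub_0r (x : H) : vsubH x vzero = x.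
Proof. unfold vsub. replace (@vopp H vzero) with (@vzero H). apply vadd_0r.
 rewrite vopp_scal, vscal_zero; auto. Qed.
Lemma vopp_vadd (x y : H) : vopp (vadd x y) = vadd (vopp x) (vopp y).
Proof. rewrite !vopp_scal. apply vscal_addv. Qed.
Lemma vopp_opp (x : H) : vopp (vopp x) = x.
Proof. rewrite !vopp_scal, vscal_assoc. rewrite <- (vscal_1 x) at 2. f_equal. apply Cx_ext; simpl; ring. Qed.
Lemma vsub_sym (x y : H) : vsubH x y = vopp (vsubH y x).
Proof. unfold vsub. rewrite vopp_vadd, vopp_opp, vadd_comm; auto. Qed.
Lemma hnorm_sub_sym (x y : H) : nrm (vsubH x y) = nrm (vsubH y x).
Proof. rewrite vsub_sym, hnorm_opp; auto. Qed.
Lemma vsub_split (x y w : H) : vsubH x y = vadd (vsubH x w) (vsubH w y).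
Proof. unfold vsub. rewrite <- vadd_assoc, (vadd_assoc (vopp w)), vadd_opp, vadd_0; auto. Qed.
Lemma hnorm_tri_sub (x y w : H) : nrm (vsubH x y) <= nrm (vsubH x w) + nrm (vsubH w y).
Proof. rewrite (vsub_split x y w); apply hnorm_tri. Qed.
Lemma hnorm_sub_le (x y : H) : nrm (vsubH x y) <= nrm x + nrm y.
Proof. unfold vsub. rewrite <- (hnorm_opp y). apply hnorm_tri. Qed.
Lemma vsub_add (x y : H) : vadd (vsubH x y) y = x.
Proof. unfold vsub. rewrite <- vadd_assoc, vadd_opp, vadd_0r; auto. Qed.
Lemma hnorm_rev_tri (x y : H) : nrm x - nrm y <= nrm (vsubH x y).
Proof. pose proof (hnorm_tri (vsubH x y) y). rewrite vsub_add in H0. lra. Qed.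
Lemma vsub_eq0 (x y : H) : vsubH x y = vzero -> x = y.
Proof. intro e. rewrite <- (vsub_add x y), e, vadd_0; auto. Qed.

Definition linH (A : H -> H) := linear_op H A.
Lemma lin_zero A : linH A -> A vzero = vzero.
Proof. intros [ha hs]. assert (e := hs C0 vzero). rewrite !vscal_0 in e. exact e. Qed.
Lemma lin_opp A x : linH A -> A (vopp x) = vopp (A x).
Proof. intros [ha hs]. rewrite !vopp_scal, hs; auto. Qed.
Lemma lin_sub A x y : linH A -> A (vsubH x y) = vsubH (A x) (A y).
Proof. intros L. unfold vsub. destruct L as [ha hs]. rewrite ha, lin_opp; auto. split; auto. Qed.
Lemma lin_scal A a x : linH A -> A (vscal a x) = vscal a (A x).
Proof. intros [_ h]; auto. Qed.
Lemma lin_add A x y : linH A -> A (vadd x y) = vadd (A x) (A y).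
Proof. intros [h _]; auto. Qed.

Definition unitv (x : H) := nrm x = 1.
Lemma normalize (x : H) : x <> vzero -> unitv (vscal (RC (/ nrm x)) x).
Proof. intro h. unfold unitv. rewrite hnorm_scalR. assert (0 < nrm x).
 { destruct (hnorm_ge0 x); auto. exfalso; apply h, hnorm_eq0; auto. }
 rewrite Rabs_right. field; lra. apply Rle_ge, Rlt_le, Rinv_0_lt_compat; auto. Qed.
Lemma hnorm_pos (x : H) : x <> vzero -> 0 < nrm x.
Proof. intro h. destruct (hnorm_ge0 x); auto. exfalso; apply h, hnorm_eq0; auto. Qed.
Lemma scal_back (x : H) : x <> vzero -> vscal (RC (nrm x)) (vscal (RC (/ nrm x)) x) = x.
Proof. intro h. pose proof (hnorm_pos x h). rewrite vscal_assoc.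
 replace (Cmul _ _) with C1 by (apply Cx_ext; simpl; field; lra). apply vscal_1. Qed.

Lemma bound_from_unit (A : H -> H) (M : H -> Prop) c :
  (forall r x, M x -> M (vscal (RC r) x)) ->
  (forall r x, M x -> A (vscal (RC r) x) = vscal (RC r) (A x)) ->
  (forall x, M x -> unitv x -> nrm (A x) <= c) -> A vzero = vzero -> 0 <= c ->
  forall x, M x -> nrm (A x) <= c * nrm x.
Proof. intros hM hA hu h0 hc x Mx. destruct (classic (x = vzero)) as [e|ne].
 - subst. rewrite h0, hnorm_zero. lra.
 - assert (hu' : nrm (A (vscal (RC (/ nrm x)) x)) <= c) by (apply hu; [apply hM; auto| apply normalize; auto]).
   assert (e := normalize x ne). unfold unitv in e.
   rewrite <- (scal_back x ne). set (u := vscal (RC (/ nrm x)) x) in *.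
   rewrite hA by (apply hM; auto). rewrite !hnorm_scalR.
   pose proof (hnorm_pos x ne). rewrite Rabs_right by lra. rewrite e. nra. Qed.
End HB.


Lemma Rsup_spec E : bound E -> (exists x, E x) -> is_lub E (Rsup E).
Proof. intros b ne. unfold Rsup. destruct (excluded_middle_informative _) as [h|h].
 - destruct (completeness E (proj1 h) (proj2 h)); simpl; auto.
 - exfalso; auto. Qed.
Lemma Rsup_ub E x : bound E -> E x -> x <= Rsup E.
Proof. intros b ex. destruct (Rsup_spec E b (ex_intro _ x ex)) as [u _]. apply u; auto. Qed.
Lemma Rsup_le E b : (exists x, E x) -> (forall x, E x -> x <= b) -> Rsup E <= b.
Proof. intros ne h. assert (bd : bound E) by (exists b; intros x; apply h).
 destruct (Rsup_spec E bd ne) as [_ l]. apply l. intros x; apply h. Qed.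
Lemma Rsup_approx E eps : bound E -> (exists x, E x) -> eps > 0 -> exists x, E x /\ Rsup E - eps < x.
Proof. intros b ne he. destruct (Rsup_spec E b ne) as [u l].
 destruct (classic (exists x, E x /\ Rsup E - eps < x)) as [h|h]; auto.
 assert (Rsup E <= Rsup E - eps). { apply l. intros x ex. destruct (Rle_dec x (Rsup E - eps)); auto.
  exfalso; apply h; exists x; split; auto; lra. } lra. Qed.
Lemma Rsup_ge E x : E x -> 0 <= x -> 0 <= Rsup E.
Proof. intros ex hx. destruct (classic (bound E)) as [b|nb].
 - pose proof (Rsup_ub E x b ex). lra.
 - unfold Rsup. destruct (excluded_middle_informative _) as [h|h]; [destruct h; contradiction| lra]. Qed.

Section HC.
Variable H : HilbertSpace.
Local Notation nrm := (hnorm H).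
Local Notation vsubH := (vsub H).

Definition subsp (M : H -> Prop) := M vzero /\ (forall x y, M x -> M y -> M (vadd x y)) /\ (forall a x, M x -> M (vscal a x)).

Lemma opnorm_bound (M : H -> Prop) (A : H -> H) :
  subsp M -> (forall a x, M x -> A (vscal a x) = vscal a (A x)) -> A vzero = vzero ->
  (exists K, forall x, M x -> nrm (A x) <= K * nrm x) ->
  forall x, M x -> nrm (A x) <= opnorm_on H M A * nrm x.
Proof. intros [M0 [Ma Ms]] hA h0 [K hK]. apply bound_from_unit; auto.
 - intros x Mx ux. unfold opnorm_on. apply Rsup_ub.
   + exists (Rabs K). intros r [y [My [ny ->]]]. specialize (hK y My). pose proof (hnorm_ge0 H y).
     pose proof (Rle_abs K). pose proof (Rabs_pos K). nra.
   + exists x; repeat split; auto. unfold unitv in ux; lra.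
 - unfold opnorm_on. apply (Rsup_ge _ 0). exists vzero; rewrite h0, hnorm_zero; repeat split; auto; lra. lra. Qed.

Lemma opnorm_le (M : H -> Prop) (A : H -> H) b :
  M vzero -> (forall x, M x -> nrm x <= 1 -> nrm (A x) <= b) -> opnorm_on H M A <= b.
Proof. intros M0 h. unfold opnorm_on. apply Rsup_le.
 - exists (nrm (A vzero)). exists vzero; repeat split; auto. rewrite hnorm_zero; lra.
 - intros r [y [My [ny ->]]]. auto. Qed.

Lemma shift_lin A z : linH H A -> linH H (shift H A z).
Proof. intros [ha hs]. split.
 - intros x y. unfold shift. rewrite ha, vscal_addv. unfold vsub. rewrite vopp_vadd.
   rewrite <- !vadd_assoc. f_equal. rewrite !vadd_assoc. f_equal. apply vadd_comm.
 - intros a x. unfold shift. rewrite hs. unfold vsub. rewrite vscal_addv. f_equal.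
   rewrite !vopp_scal, !vscal_assoc. f_equal. apply Cx_ext; simpl; ring. Qed.

Lemma inv_homog (M : H -> Prop) (B Rv : H -> H) :
  subsp M -> linH H B -> bounded_inverse_on H M B Rv ->
  forall a x, M x -> Rv (vscal a x) = vscal a (Rv x).
Proof. intros [M0 [Ma Ms]] LB [h1 [h2 [h3 _]]] a x Mx.
 rewrite <- (h3 x Mx) at 1. rewrite <- lin_scal by auto. apply h2. apply Ms, h1; auto. Qed.
Lemma inv_zero (M : H -> Prop) (B Rv : H -> H) :
  subsp M -> linH H B -> bounded_inverse_on H M B Rv -> Rv vzero = vzero.
Proof. intros SM LB HR. assert (e := @inv_homog M B Rv SM LB HR C0 vzero). rewrite !vscal_0 in e. apply e, SM. Qed.

Definition invariant (M : H -> Prop) (A : H -> H) := forall x, M x -> M (A x).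
Definition nontriv (M : H -> Prop) := exists x, M x /\ x <> vzero.

Lemma Psi_facts M A z : subsp M -> linH H A -> invariant M A -> nontriv M ->
  (exists Rv, bounded_inverse_on H M (shift H A z) Rv) ->
  0 < Psi_on H M A z /\
  (forall x, M x -> Psi_on H M A z * nrm x <= nrm (shift H A z x)) /\
  (forall eps, eps > 0 -> exists x, M x /\ unitv H x /\ nrm (shift H A z x) < Psi_on H M A z + eps).
Proof. intros SM LA IA [x0 [Mx0 nx0]] hex. pose proof SM as [M0 [Ma Ms]].
 assert (LB := shift_lin A z LA). set (B := shift H A z) in *.
 assert (IB : invariant M B). { intros x Mx. unfold B, shift, vsub. apply Ma; auto. rewrite vopp_scal. apply Ms, Ms; auto. }
 unfold Psi_on. destruct (excluded_middle_informative _) as [h|h]; [|contradiction].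
 destruct (constructive_indefinite_description _ h) as [Rv HR]. simpl. fold B in HR |- *.
 pose proof HR as [h1 [h2 [h3 [K0 hK0]]]].
 set (K := opnorm_on H M Rv).
 assert (bR : forall y, M y -> nrm (Rv y) <= K * nrm y).
 { apply opnorm_bound; auto. intros; eapply inv_homog; eauto. eapply inv_zero; eauto. exists K0; auto. }
 assert (low : forall x, M x -> nrm x <= K * nrm (B x)).
 { intros x Mx. rewrite <- (h2 x Mx) at 1. apply bR, IB; auto. }
 pose proof (hnorm_pos H x0 nx0). pose proof (low x0 Mx0). pose proof (hnorm_ge0 H (B x0)).
 assert (Kpos : 0 < K). { destruct (Rle_lt_dec K 0); auto. assert (K * nrm (B x0) <= 0) by nra. lra. }
 split; [apply Rinv_0_lt_compat; auto|split].
 - intros x Mx. specialize (low x Mx). apply (Rmult_le_reg_l K); auto. rewrite <- Rmult_assoc, Rinv_r; lra.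
 - intros eps he. assert (qpos : 0 < K * (eps * K) / (1 + eps * K)).
   { unfold Rdiv. apply Rmult_lt_0_compat. apply Rmult_lt_0_compat; nra. apply Rinv_0_lt_compat; nra. }
   assert (qK : K*(eps*K)/(1+eps*K) < K). { apply Rmult_lt_reg_r with (1+eps*K); [nra|]. unfold Rdiv. rewrite Rmult_assoc, Rinv_l by nra. nra. }
   set (d := (K * (eps * K) / (1 + eps * K)) / 2).
   assert (dpos : 0 < d) by (unfold d; lra).
   assert (dlt : d < K * (eps * K) / (1 + eps * K)) by (unfold d; lra).
   destruct (Rsup_approx (fun r => exists x, M x /\ nrm x <= 1 /\ r = nrm (Rv x)) d) as [r [[y [My [ny ->]]] hr]]; auto.
   + exists K. intros r [y [My [ny ->]]]. specialize (bR y My). nra.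
   + exists (nrm (Rv vzero)), vzero. repeat split; auto. rewrite hnorm_zero; lra.
   + change (K - d < nrm (Rv y)) in hr. assert (Rvy : Rv y <> vzero). { intro e. rewrite e, hnorm_zero in hr. assert (d < K) by lra.
       lra. }
     exists (vscal (RC (/ nrm (Rv y))) (Rv y)). split; [apply Ms, h1; auto| split; [apply normalize; auto|]].
     rewrite lin_scal, h3, hnorm_scalR by auto. pose proof (hnorm_pos H _ Rvy) as pRv.
     rewrite Rabs_right by (apply Rle_ge, Rlt_le, Rinv_0_lt_compat; auto).
     assert (/ nrm (Rv y) < / (K - d)). { apply Rinv_lt_contravar; [|lra]. apply Rmult_lt_0_compat; auto.
       assert (d < K) by lra. lra. }
     assert (/ (K - d) < / K + eps).
     { assert (dK : d < K * (eps * K) / (1 + eps * K)) by exact dlt.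
       assert (K - d > K / (1 + eps * K)). { assert (K - K * (eps * K) / (1 + eps * K) = K / (1 + eps * K)) by (field; nra). lra. }
       assert (0 < K / (1 + eps*K)) by (apply Rdiv_lt_0_compat; nra).
       apply Rlt_le_trans with (/ (K / (1 + eps * K))). apply Rinv_lt_contravar; [nra|lra].
       right. field. nra. }
     pose proof (hnorm_ge0 H y). assert (0 < / nrm (Rv y)) by (apply Rinv_0_lt_compat; auto). nra. Qed.

Lemma Psi_lower M A z c : subsp M -> linH H A -> invariant M A -> nontriv M ->
  (exists Rv, bounded_inverse_on H M (shift H A z) Rv) -> 0 < c ->
  (forall x, M x -> c * nrm x <= nrm (shift H A z x)) -> c <= Psi_on H M A z.
Proof. intros SM LA IA [x0 [Mx0 nx0]] hex cpos hc. pose proof SM as [M0 [Ma Ms]].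
 unfold Psi_on. destruct (excluded_middle_informative _) as [h|h]; [|contradiction].
 destruct (constructive_indefinite_description _ h) as [Rv HR]. simpl.
 pose proof HR as [h1 [h2 [h3 [K0 hK0]]]].
 assert (b : opnorm_on H M Rv <= / c).
 { apply opnorm_le; auto. intros y My ny. specialize (hc (Rv y) (h1 y My)). rewrite h3 in hc by auto.
   apply (Rmult_le_reg_l c); auto. rewrite Rinv_r by lra. nra. }
 assert (pos : 0 < opnorm_on H M Rv).
 { assert (e := h2 x0 Mx0). pose proof (hnorm_pos H x0 nx0).
   assert (nrm (Rv (shift H A z x0)) <= opnorm_on H M Rv * nrm (shift H A z x0)).
   { apply opnorm_bound; auto. intros; apply (@inv_homog M (shift H A z) Rv SM (shift_lin A z LA) HR); auto.
     apply (@inv_zero M (shift H A z) Rv SM (shift_lin A z LA) HR). exists K0; auto.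
     unfold shift, vsub. apply Ma; auto. rewrite vopp_scal; apply Ms, Ms; auto. }
   rewrite e in H1. pose proof (hnorm_ge0 H (shift H A z x0)).
   destruct (Rle_lt_dec (opnorm_on H M Rv) 0); auto. assert (opnorm_on H M Rv * nrm (shift H A z x0) <= 0) by nra. lra. }
 rewrite <- (Rinv_inv c). apply Rinv_le_contravar; auto. Qed.

Lemma Psi_noinv M A z : ~ (exists Rv, bounded_inverse_on H M (shift H A z) Rv) -> Psi_on H M A z = 0.
Proof. intro h. unfold Psi_on. destruct (excluded_middle_informative _); [contradiction|auto]. Qed.

Lemma Psi_ge0 M A z : M vzero -> 0 <= Psi_on H M A z.
Proof. intro M0. unfold Psi_on. destruct (excluded_middle_informative _) as [h|h]; [|lra].
 destruct (constructive_indefinite_description _ h) as [Rv HR]. simpl.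
 destruct (Rle_lt_dec (opnorm_on H M Rv) 0) as [l|l].
 - assert (opnorm_on H M Rv = 0). { apply Rle_antisym; auto. unfold opnorm_on. eapply Rsup_ge.
     exists vzero; repeat split; eauto. rewrite hnorm_zero; lra. apply hnorm_ge0. }
   rewrite H0, Rinv_0; lra.
 - left; apply Rinv_0_lt_compat; auto. Qed.

Lemma Psi_triv M A z : subsp M -> linH H A -> (forall x, M x -> x = vzero) -> Psi_on H M A z = 0.
Proof. intros SM LA h. unfold Psi_on. destruct (excluded_middle_informative _) as [h'|h']; [|lra].
 destruct (constructive_indefinite_description _ h') as [Rv HR]. simpl.
 assert (opnorm_on H M Rv = 0). { apply Rle_antisym. apply opnorm_le. apply SM. intros x Mx _.
   rewrite (h x Mx). rewrite (@inv_zero M (shift H A z) Rv SM (shift_lin A z LA) HR), hnorm_zero; lra.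
   unfold opnorm_on. eapply Rsup_ge. exists vzero; repeat split; eauto. apply SM. rewrite hnorm_zero; lra. apply hnorm_ge0. }
 rewrite H0, Rinv_0; lra. Qed.

Lemma adj_low (M : H -> Prop) (B Rv A' : H -> H) K : 0 <= K ->
  (forall y, M y -> M (Rv y) /\ B (Rv y) = y) -> (forall y, M y -> nrm (Rv y) <= K * nrm y) ->
  (forall u v, M u -> M v -> inner (B u) v = inner u (A' v)) ->
  forall v, M v -> nrm v <= K * nrm (A' v).
Proof. intros K0 hR hK hadj v Mv. destruct (hR v Mv) as [MR e].
 destruct (Req_dec (nrm v) 0) as [z|nz].
 - rewrite z. pose proof (hnorm_ge0 H (A' v)). pose proof (hK v Mv). rewrite z in H1.
   nra.
 - assert (hv : nrm v * nrm v = Cre (inner (B (Rv v)) v)) by (rewrite e; apply hnorm_sq).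
   rewrite hadj in hv by auto. pose proof (CS_re H (Rv v) (A' v)). pose proof (hK v Mv).
   pose proof (hnorm_ge0 H v). pose proof (hnorm_ge0 H (A' v)). pose proof (hnorm_ge0 H (Rv v)).
   assert (0 < nrm v) by lra.
   assert (nrm v * nrm v <= K * nrm v * nrm (A' v)) by nra.
   apply (Rmult_le_reg_l (nrm v)); auto. nra. Qed.
End HC.


Fixpoint csum (n : nat) (f : nat -> Cx) : Cx := match n with O => C0 | S n => Cadd (csum n f) (f n) end.

Lemma Cmul_assoc' a b c : Cmul (Cmul a b) c = Cmul a (Cmul b c).
Proof. apply Cx_ext; simpl; ring. Qed.
Lemma Cmul_1r a : Cmul a C1 = a.
Proof. apply Cx_ext; simpl; ring. Qed.
Lemma Cmul_comm' a b : Cmul a b = Cmul b a.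
Proof. apply Cx_ext; simpl; ring. Qed.

Section HD.
Variable H : HilbertSpace.
Local Notation nrm := (hnorm H).
Local Notation vsubH := (vsub H).

Fixpoint vsum (n : nat) (f : nat -> H) : H := match n with O => vzero | S n => vadd (vsum n f) (f n) end.

Lemma fold_lc_aux (c : nat -> Cx) (e : nat -> H) l x :
  fold_right (fun i acc => vadd (vscal (c i) (e i)) acc) x l =
  vadd (fold_right (fun i acc => vadd (vscal (c i) (e i)) acc) vzero l) x.
Proof. induction l; simpl. rewrite vadd_0; auto. rewrite IHl, vadd_assoc; auto. Qed.
Lemma fold_lc (c : nat -> Cx) (e : nat -> H) k :
  fold_right (fun i acc => vadd (vscal (c i) (e i)) acc) vzero (seq 0 k) = vsum k (fun i => vscal (c i) (e i)).
Proof. induction k; auto. rewrite seq_S, fold_right_app. simpl. rewrite fold_lc_aux, IHk, vadd_0r; auto. Qed.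

Lemma vsum_ext n f g : (forall i, (i < n)%nat -> f i = g i) -> vsum n f = vsum n g.
Proof. induction n; intros h; simpl; auto. rewrite IHn, h; auto. Qed.
Lemma vsum_zero n f : (forall i, (i < n)%nat -> f i = vzero) -> vsum n f = vzero.
Proof. induction n; intros h; simpl; auto. rewrite IHn, h, vadd_0; auto. Qed.
Lemma vsum_add n f g : vsum n (fun i => vadd (f i) (g i)) = vadd (vsum n f) (vsum n g).
Proof. induction n; simpl. rewrite vadd_0; auto. rewrite IHn. rewrite <- !vadd_assoc. f_equal.
 rewrite !vadd_assoc. f_equal. apply vadd_comm. Qed.
Lemma vsum_scal n a f : vsum n (fun i => vscal a (f i)) = vscal a (vsum n f).
Proof. induction n; simpl. rewrite vscal_zero; auto. rewrite IHn, vscal_addv; auto. Qed.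
Lemma vsum_opp n f : vsum n (fun i => vopp (f i)) = vopp (vsum n f).
Proof. rewrite vopp_scal, <- vsum_scal. apply vsum_ext; intros; apply vopp_scal. Qed.
Lemma vsum_sub n f g : vsum n (fun i => vsubH (f i) (g i)) = vsubH (vsum n f) (vsum n g).
Proof. unfold vsub. rewrite vsum_add, vsum_opp; auto. Qed.
Lemma vsum_lin A n f : linH H A -> A (vsum n f) = vsum n (fun i => A (f i)).
Proof. intro L. induction n; simpl. apply lin_zero; auto. rewrite lin_add, IHn; auto. Qed.
Lemma vsum_shift n f : vsum (S n) f = vadd (f O) (vsum n (fun i => f (S i))).
Proof. induction n. simpl. rewrite vadd_0, vadd_0r; auto.
 change (vsum (S (S n)) f) with (vadd (vsum (S n) f) (f (S n))). rewrite IHn. simpl. rewrite vadd_assoc; auto. Qed.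
Lemma vsum_scal_sum n d r (w : H) : vsum n (fun i => vscal (d i) (vscal (r i) w)) = vscal (csum n (fun i => Cmul (d i) (r i))) w.
Proof. induction n; simpl. rewrite vscal_0; auto. rewrite IHn, vscal_assoc, vscal_adds; auto. Qed.

Lemma vsub_addadd (a b c d : H) : vsubH (vadd a b) (vadd c d) = vadd (vsubH a c) (vsubH b d).
Proof. unfold vsub. rewrite vopp_vadd. rewrite <- !vadd_assoc. f_equal. rewrite !vadd_assoc. f_equal. apply vadd_comm. Qed.

Lemma vsum_const_vec n f (w : H) : vsum n (fun i => vscal (f i) w) = vscal (csum n f) w.
Proof. induction n; simpl. rewrite vscal_0; auto. rewrite IHn, vscal_adds; auto. Qed.

Definition sk (p i : nat) : nat := if Nat.ltb i p then i else S i.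
Definition unsk (p j : nat) : nat := if Nat.ltb j p then j else pred j.
Lemma sk_ne p i : sk p i <> p.
Proof. unfold sk. destruct (Nat.ltb_spec i p); lia. Qed.
Lemma unsk_sk p i : unsk p (sk p i) = i.
Proof. unfold sk, unsk. destruct (Nat.ltb_spec i p). destruct (Nat.ltb_spec i p); lia.
 destruct (Nat.ltb_spec (S i) p); lia. Qed.
Lemma sk_lt p i m : (i < m)%nat -> (sk p i < S m)%nat.
Proof. unfold sk. destruct (Nat.ltb_spec i p); lia. Qed.

Lemma vsum_skip m p f : (p < S m)%nat -> vsum (S m) f = vadd (f p) (vsum m (fun i => f (sk p i))).
Proof. revert p. induction m; intros p hp.
 - assert (p = O) by lia. subst. simpl. rewrite vadd_0, vadd_0r; auto.
 - destruct (Nat.eq_dec p (S m)) as [e|ne].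
   + subst. change (vsum (S (S m)) f) with (vadd (vsum (S m) f) (f (S m))). rewrite vadd_comm. f_equal.
     apply vsum_ext. intros i hi. unfold sk. destruct (Nat.ltb_spec i (S m)); auto; lia.
   + change (vsum (S (S m)) f) with (vadd (vsum (S m) f) (f (S m))). rewrite (IHm p) by lia.
     simpl. rewrite vadd_assoc. f_equal. f_equal. unfold sk. destruct (Nat.ltb_spec m p); auto; lia. Qed.

Definition span (k : nat) (e : nat -> H) (y : H) := exists c, y = vsum k (fun i => vscal (c i) (e i)).

Lemma steinitz k (e : nat -> H) : forall m (u : nat -> H), (k < m)%nat -> (forall i, (i < m)%nat -> span k e (u i)) ->
  exists d, (exists i, (i < m)%nat /\ d i <> C0) /\ vsum m (fun i => vscal (d i) (u i)) = vzero.
Proof. induction k; intros m u hk hs.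
 - exists (fun i => if Nat.eqb i 0 then C1 else C0). split.
   + exists O; split; [lia|]. simpl. intro e0. injection e0; lra.
   + apply vsum_zero. intros i hi. destruct (hs i hi) as [c ->]. simpl. apply vscal_zero.
 - assert (hc : forall i, exists c, (i < m)%nat -> u i = vsum (S k) (fun j => vscal (c j) (e j))).
   { intro i. destruct (Nat.ltb_spec i m) as [l|l]. destruct (hs i l) as [c hc]. exists c; auto.
     exists (fun _ => C0); intros; lia. }
   set (a := fun i => proj1_sig (constructive_indefinite_description _ (hc i))).
   assert (ha : forall i, (i < m)%nat -> u i = vsum (S k) (fun j => vscal (a i j) (e j))).
   { intros i hi. unfold a. destruct (constructive_indefinite_description _ (hc i)); simpl; auto. }
   clearbody a.
   destruct (classic (exists p, (p < m)%nat /\ a p k <> C0)) as [[p [hp ap]]|np].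
   + set (r := fun i => Cmul (a i k) (Cinv (a p k))).
     set (u' := fun i => vsubH (u (sk p i)) (vscal (r (sk p i)) (u p))).
     destruct m as [|m]; [lia|].
     destruct (IHk m u') as [d' [[i0 [hi0 di0]] hd']]; [lia| |].
     { intros i hi. unfold u'. pose proof (sk_lt p i m hi) as hq. set (q := sk p i) in *.
       rewrite (ha q hq), (ha p hp).
       exists (fun j => Cadd (a q j) (Copp (Cmul (r q) (a p j)))).
       simpl. rewrite vscal_addv, vsub_addadd.
       replace (vsubH (vscal (a q k) (e k)) (vscal (r q) (vscal (a p k) (e k)))) with (@vzero H).
       - rewrite vadd_0r, <- vsum_scal, <- vsum_sub. apply vsum_ext. intros j hj.
         unfold vsub. rewrite vopp_scal, !vscal_assoc, <- vscal_adds. f_equal.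
         apply Cx_ext; simpl; ring.
       - rewrite vscal_assoc. replace (Cmul (r q) (a p k)) with (a q k). symmetry; apply vsub_self.
         unfold r. rewrite Cmul_assoc', Cmul_inv, Cmul_1r; auto. }
     exists (fun j => if Nat.eqb j p then Copp (csum m (fun i => Cmul (d' i) (r (sk p i)))) else d' (unsk p j)).
     split.
     * exists (sk p i0). split. apply sk_lt; auto. destruct (Nat.eqb_spec (sk p i0) p). exfalso; eapply sk_ne; eauto.
       rewrite unsk_sk; auto.
     * rewrite (vsum_skip m p) by auto. rewrite Nat.eqb_refl.
       erewrite vsum_ext. 2:{ intros i hi. destruct (Nat.eqb_spec (sk p i) p). exfalso; eapply sk_ne; eauto.
         rewrite unsk_sk. reflexivity. }
       unfold u' in hd'. erewrite vsum_ext in hd'. 2:{ intros i hi. unfold vsub. rewrite vscal_addv, vopp_scal, vscal_assoc, vscal_assoc. reflexivity. }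
       rewrite vsum_add in hd'. rewrite vsum_const_vec in hd'.
       replace (csum m (fun i => Cmul (Cmul (d' i) (RC (-1))) (r (sk p i))))
         with (Copp (csum m (fun i => Cmul (d' i) (r (sk p i))))) in hd'.
       2:{ clear. induction m; simpl. apply Cx_ext; simpl; ring. rewrite <- IHm. apply Cx_ext; simpl; ring. }
       rewrite vadd_comm. exact hd'.
   + destruct (IHk m u) as [d hd]; [lia| |exists d; auto].
     intros i hi. exists (a i). rewrite (ha i hi). simpl.
     assert (a i k = C0) by (apply NNPP; intro; apply np; exists i; auto).
     rewrite H0, vscal_0, vadd_0r; auto. Qed.

Fixpoint pw (A : H -> H) (i : nat) (v : H) : H := match i with O => v | S i => A (pw A i v) end.

Lemma indep_powers (M : H -> Prop) (A : H -> H) v : subsp H M -> linH H A -> invariant H M A ->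
  (forall x, M x -> A x = vzero -> x = vzero) -> M v -> (forall x, M x -> A x <> v) ->
  forall n d, vsum n (fun i => vscal (d i) (pw A i v)) = vzero -> forall i, (i < n)%nat -> d i = C0.
Proof. intros SM LA IA inj Mv nr. destruct SM as [M0 [Ma Ms]].
 assert (Mp : forall i, M (pw A i v)) by (induction i; simpl; auto).
 induction n; intros d hd i hi; [lia|].
 rewrite vsum_shift in hd. simpl in hd.
 assert (e : vsum n (fun i => vscal (d (S i)) (A (pw A i v))) = A (vsum n (fun i => vscal (d (S i)) (pw A i v)))).
 { rewrite vsum_lin by auto. apply vsum_ext; intros; rewrite lin_scal; auto. }
 rewrite e in hd. set (w := vsum n (fun i => vscal (d (S i)) (pw A i v))) in *.
 assert (Mw : M w). { unfold w. clear -Ma Ms M0 Mp. induction n; simpl; auto. }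
 destruct (classic (d O = C0)) as [d0|d0].
 - rewrite d0, vscal_0, vadd_0 in hd. apply inj in hd; auto.
   destruct i; auto. apply (IHn (fun j => d (S j))); auto. lia.
 - exfalso. apply (nr (vscal (Cmul (RC (-1)) (Cinv (d O))) w)). apply Ms; auto.
   rewrite lin_scal by auto. rewrite <- vscal_assoc.
   assert (A w = vopp (vscal (d O) v)). { rewrite <- (vadd_0 (A w)), <- (vadd_oppr H (vscal (d O) v)).
     rewrite <- vadd_assoc, (vadd_comm (vopp _)), vadd_assoc, hd, vadd_0; auto. }
   rewrite H0, vopp_scal, !vscal_assoc. transitivity (vscal C1 v); [f_equal | apply vscal_1].
   rewrite <- (Cmul_inv _ d0). apply Cx_ext; simpl; ring. Qed.

Lemma fd_surj (M : H -> Prop) (A : H -> H) k (e : nat -> H) : subsp H M -> linH H A -> invariant H M A ->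
  (forall y, M y -> span k e y) ->
  (forall x, M x -> A x = vzero -> x = vzero) -> forall v, M v -> exists x, M x /\ A x = v.
Proof. intros SM LA IA sp inj v Mv. apply NNPP; intro nr.
 assert (nr' : forall x, M x -> A x <> v) by (intros x Mx ee; apply nr; exists x; auto).
 assert (Mp : forall i, M (pw A i v)) by (induction i; simpl; auto).
 destruct (steinitz k e (S k) (fun i => pw A i v)) as [d [[i [hi di]] hd]]; auto.
 apply di. eapply indep_powers; eauto. Qed.

Lemma mk_inverse (M : H -> Prop) (B : H -> H) c : subsp H M -> linH H B -> invariant H M B -> 0 < c ->
  (forall x, M x -> c * nrm x <= nrm (B x)) -> (forall v, M v -> exists x, M x /\ B x = v) ->
  exists Rv, bounded_inverse_on H M B Rv.
Proof. intros SM LB IB cpos low sur.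
 assert (hc : forall y, exists x, M y -> M x /\ B x = y).
 { intro y. destruct (classic (M y)) as [My|nMy]. destruct (sur y My) as [x hx]; exists x; auto. exists vzero; tauto. }
 exists (fun y => proj1_sig (constructive_indefinite_description _ (hc y))).
 assert (hR : forall y, M y -> M (proj1_sig (constructive_indefinite_description _ (hc y))) /\
           B (proj1_sig (constructive_indefinite_description _ (hc y))) = y).
 { intros y My. destruct (constructive_indefinite_description _ (hc y)); simpl; auto. }
 assert (inj : forall x x', M x -> M x' -> B x = B x' -> x = x').
 { intros x x' Mx Mx' e. apply vsub_eq0. apply hnorm_eq0. destruct SM as [M0 [Ma Ms]].
   assert (M (vsubH x x')) by (unfold vsub; apply Ma; auto; rewrite vopp_scal; auto).
   specialize (low _ H0). rewrite lin_sub, e, vsub_self, hnorm_zero in low by auto.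
   pose proof (hnorm_ge0 H (vsubH x x')). nra. }
 split; [|split; [|split]].
 - intros y My. apply hR; auto.
 - intros x Mx. apply inj; auto. apply hR; auto. apply hR; auto.
 - intros y My; apply hR; auto.
 - exists (/ c). intros y My. destruct (hR y My) as [h1 h2]. specialize (low _ h1). rewrite h2 in low.
   apply (Rmult_le_reg_l c); auto. rewrite <- Rmult_assoc, Rinv_r by lra. lra. Qed.
End HD.


Lemma Un_cv0_norm (u : nat -> R) : (forall eps, eps > 0 -> exists N, forall n, (n >= N)%nat -> Rabs (u n) < eps) -> Un_cv u 0.
Proof. intros h e he. destruct (h e he) as [N hN]. exists N. intros n hn. unfold Rdist. rewrite Rminus_0_r. auto. Qed.

Lemma small_inv (eps : R) : eps > 0 -> exists N : nat, forall n, (n >= N)%nat -> / (INR n + 1) < eps.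
Proof. intro he. destruct (archimed (/ eps)) as [h1 _]. destruct (Z.le_gt_cases (up (/ eps)) 0) as [l|l].
 - exists O. intros n _. apply IZR_le in l. pose proof (Rinv_0_lt_compat eps he). lra.
 - exists (Z.to_nat (up (/ eps))). intros n hn. apply le_INR in hn. rewrite INR_IZR_INZ, Z2Nat.id in hn by lia.
   assert (/ eps < INR n + 1) by lra. pose proof (Rinv_0_lt_compat eps he).
   rewrite <- (Rinv_inv eps). apply Rinv_lt_contravar; auto. nra. Qed.

Section HE.
Variable H : HilbertSpace.
Local Notation nrm := (hnorm H).
Local Notation vsubH := (vsub H).

Definition closedset (C : H -> Prop) := forall (u : nat -> H) l, (forall n, C (u n)) ->
  Un_cv (fun n => nrm (vsubH (u n) l)) 0 -> C l.

Lemma parallelogram (x y : H) : Cre (inner (vadd x y) (vadd x y)) + Cre (inner (vsubH x y) (vsubH x y)) =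
  2 * Cre (inner x x) + 2 * Cre (inner y y).
Proof. rewrite expand_add. unfold vsub. rewrite expand_add. repeat (rewrite inner_oppr || rewrite inner_oppl).
 simpl. ring_simplify. destruct (inner y y). simpl. ring. Qed.

Lemma Cn2_zero a : Cn2 a = 0 -> a = C0.
Proof. unfold Cn2. intro h. apply Cx_ext; simpl; nra. Qed.

Lemma inner_ext (u u' : H) : (forall x, inner x u = inner x u') -> u = u'.
Proof. intro h. apply vsub_eq0. apply inner_def. unfold vsub at 2. rewrite inner_addr, inner_oppr, h.
 destruct (inner (vsubH u u') u'). simpl. ring. Qed.

Lemma two_half (w s : H) : vscal (RC 2) (vsubH w (vscal (RC (/2)) s)) = vsubH (vadd w w) s.
Proof. unfold vsub. rewrite vscal_addv. f_equal.
 - replace (RC 2) with (Cadd C1 C1) by (apply Cx_ext; simpl; ring). rewrite vscal_adds, vscal_1; auto.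
 - rewrite !vopp_scal, !vscal_assoc. f_equal. apply Cx_ext; simpl; field. Qed.

Lemma proj_thm (C : H -> Prop) w : complete_space H -> subsp H C -> closedset C -> ~ C w ->
  exists v, v <> vzero /\ forall c, C c -> inner c v = C0.
Proof. intros comp [C0' [Ca Cs]] cl nw.
 set (E := fun r => exists c, C c /\ r = - nrm (vsubH w c)).
 assert (bE : bound E) by (exists 0; intros r [c [_ ->]]; pose proof (hnorm_ge0 H (vsubH w c)); lra).
 assert (nE : exists r, E r) by (exists (- nrm (vsubH w vzero)), vzero; auto).
 set (d := - Rsup E).
 assert (dlow : forall c, C c -> d <= nrm (vsubH w c)). { intros c Cc. pose proof (Rsup_ub E _ bE (ex_intro _ c (conj Cc eq_refl))). unfold d; lra. }
 assert (hseq : forall n : nat, exists c, C c /\ nrm (vsubH w c) < d + / (INR n + 1)).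
 { intro n. destruct (Rsup_approx E (/ (INR n + 1)) bE nE) as [r [[c [Cc ->]] hr]].
   apply Rlt_gt, Rinv_0_lt_compat. pose proof (pos_INR n); lra. exists c; split; auto. unfold d; lra. }
 set (cs := fun n => proj1_sig (constructive_indefinite_description _ (hseq n))).
 assert (hcs : forall n, C (cs n) /\ nrm (vsubH w (cs n)) < d + / (INR n + 1)).
 { intro n. unfold cs. destruct (constructive_indefinite_description _ (hseq n)); auto. }
 clearbody cs.
 assert (d0 : 0 <= d). { pose proof (dlow vzero C0'). pose proof (hcs O). unfold d in *.
   destruct (Rle_dec 0 d); auto. assert (Rsup E <= 0). apply Rsup_le; auto. intros r [c [_ ->]]. pose proof (hnorm_ge0 H (vsubH w c)); lra. unfold d; lra. }
 assert (half : forall x y, C x -> C y -> C (vscal (RC (/2)) (vadd x y))) by auto.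
 assert (cauchy : forall n m, Cre (inner (vsubH (cs n) (cs m)) (vsubH (cs n) (cs m))) <=
     2 * ((d + / (INR n + 1)) * (d + / (INR n + 1))) + 2 * ((d + / (INR m + 1)) * (d + / (INR m + 1))) - 4 * (d * d)).
 { intros n m. destruct (hcs n) as [Cn hn], (hcs m) as [Cm hm].
   pose proof (parallelogram (vsubH w (cs m)) (vsubH w (cs n))).
   replace (vsubH (vsubH w (cs m)) (vsubH w (cs n))) with (vsubH (cs n) (cs m)) in H0.
   2:{ unfold vsub. rewrite vopp_vadd, vopp_opp. rewrite <- vadd_assoc, (vadd_comm (vopp (cs m))), vadd_assoc, vadd_assoc, vadd_oppr, vadd_0, vadd_comm; auto. }
   replace (vadd (vsubH w (cs m)) (vsubH w (cs n))) with (vscal (RC 2) (vsubH w (vscal (RC (/2)) (vadd (cs m) (cs n))))) in H0.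
   2:{ rewrite two_half. unfold vsub. rewrite vopp_vadd. rewrite <- !vadd_assoc. f_equal.
       rewrite !vadd_assoc. f_equal. apply vadd_comm. }
   rewrite inner_scal2 in H0. unfold Cn2 in H0; simpl in H0.
   pose proof (dlow _ (half _ _ Cm Cn)). rewrite <- hnorm_sq in H0. rewrite <- !hnorm_sq in H0.
   pose proof (hnorm_ge0 H (vsubH w (cs m))). pose proof (hnorm_ge0 H (vsubH w (cs n))).
   rewrite <- hnorm_sq. nra. }
 assert (cauchy2 : forall eps, eps > 0 -> exists N, forall n m, (n >= N)%nat -> (m >= N)%nat -> nrm (vsubH (cs n) (cs m)) < eps).
 { intros eps he. set (t := eps * eps / (8 * (d + 1))).
   assert (tpos : t > 0) by (unfold t; apply Rdiv_lt_0_compat; nra).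
   destruct (small_inv (Rmin t 1)) as [N hN]. apply Rmin_pos; lra. exists N. intros n m hn hm.
   pose proof (hN n hn). pose proof (hN m hm). pose proof (Rmin_l t 1). pose proof (Rmin_r t 1).
   set (a := / (INR n + 1)) in *. set (b := / (INR m + 1)) in *.
   assert (0 < a) by (unfold a; apply Rinv_0_lt_compat; pose proof (pos_INR n); lra).
   assert (0 < b) by (unfold b; apply Rinv_0_lt_compat; pose proof (pos_INR m); lra).
   pose proof (cauchy n m). fold a b in H6. rewrite <- hnorm_sq in H6.
   apply sq_le_sq in H6 || idtac.
   assert (nrm (vsubH (cs n) (cs m)) * nrm (vsubH (cs n) (cs m)) < eps * eps).
   { assert (2 * ((d + a) * (d + a)) + 2 * ((d + b) * (d + b)) - 4 * (d * d) = 4*d*(a+b) + 2*(a*a + b*b)) by ring.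
     assert (4*d*(a+b) + 2*(a*a+b*b) <= 4*d*(2*t) + 2*(t+t)) by nra.
     assert (4 * d * (2 * t) + 2 * (t + t) = 8 * (d+1) * t - 4 * t) by ring.
     assert (8 * (d + 1) * t = eps * eps) by (unfold t; field; lra). nra. }
   pose proof (hnorm_ge0 H (vsubH (cs n) (cs m))). nra. }
 destruct (comp cs cauchy2) as [p hp].
 assert (Cp : C p) by (apply (cl cs); auto; intro n; apply hcs).
 assert (dist : nrm (vsubH w p) <= d).
 { apply Rnot_lt_le. intro l. set (g := nrm (vsubH w p) - d).
   destruct (small_inv (g/2)) as [N1 hN1]; [unfold g; lra|]. destruct (hp (g/2)) as [N2 hN2]; [unfold g; lra|].
   set (n := max N1 N2). specialize (hN1 n (Nat.le_max_l _ _)). specialize (hN2 n (Nat.le_max_r _ _)).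
   unfold Rdist in hN2. rewrite Rminus_0_r, Rabs_right in hN2 by (apply Rle_ge, hnorm_ge0).
   pose proof (hnorm_tri_sub H w p (cs n)). destruct (hcs n) as [_ hc]. fold n in hc. unfold g in *. lra. }
 exists (vsubH w p). split.
 - intro e. apply nw. apply vsub_eq0 in e. subst; auto.
 - intros c Cc. set (v := vsubH w p).
   assert (key : forall a : Cx, Cre (inner v v) <= Cre (inner (vsubH v (vscal a c)) (vsubH v (vscal a c)))).
   { intro a. rewrite <- !hnorm_sq.
     assert (vsubH v (vscal a c) = vsubH w (vadd p (vscal a c))).
     { unfold v, vsub. rewrite vopp_vadd. rewrite vadd_assoc; auto. }
     rewrite H0. pose proof (dlow _ (Ca _ _ Cp (Cs a c Cc))). fold v in dist. pose proof (hnorm_ge0 H v). nra. }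
   set (q := inner v c).
   destruct (Req_dec (Cn2 q) 0) as [z|nz].
   + apply Cn2_zero in z. rewrite inner_conj. fold q. rewrite z. apply Cx_ext; simpl; ring.
   + exfalso. set (lam := / (Cre (inner c c) + 1)). pose proof (inner_pos c).
     assert (lp : 0 < lam) by (unfold lam; apply Rinv_0_lt_compat; lra).
     specialize (key (Cmul (RC lam) q)). rewrite expand_sub in key. fold q in key.
     assert (Cre (Cmul (Cconj (Cmul (RC lam) q)) q) = lam * Cn2 q) by (destruct q; unfold Cn2; simpl; ring).
     assert (Cn2 (Cmul (RC lam) q) = lam * lam * Cn2 q) by (destruct q; unfold Cn2; simpl; ring).
     rewrite H1, H2 in key. pose proof (Cn2_ge0 q). assert (0 < Cn2 q) by lra.
     assert (lam * (Cre (inner c c) + 1) = 1) by (unfold lam; field; lra).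
     assert (lam * Cre (inner c c) < 1) by nra.
     assert (0 < lam * Cn2 q) by (apply Rmult_lt_0_compat; auto).
     assert (0 < (lam * Cn2 q) * (2 - lam * Cre (inner c c))) by (apply Rmult_lt_0_compat; lra).
     lra. Qed.

Lemma shift_adj (M : H -> Prop) (A A' : H -> H) z :
  (forall u v, M u -> M v -> inner (A u) v = inner u (A' v)) ->
  forall u v, M u -> M v -> inner (shift H A z u) v = inner u (shift H A' (Cconj z) v).
Proof. intros h u v Mu Mv. unfold shift, vsub. rewrite inner_addl, inner_addr, inner_oppl, inner_oppr,
 inner_scall, inner_scalr, h by auto. f_equal. f_equal. destruct z. simpl. f_equal. apply Cx_ext; simpl; ring. Qed.

Definition fullset : H -> Prop := fun _ => True.
Lemma subsp_full : subsp H fullset.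
Proof. repeat split. Qed.

Lemma range_closed (B : H -> H) a K : complete_space H -> linH H B -> 0 < a ->
  (forall x, a * nrm x <= nrm (B x)) -> (forall x, nrm (B x) <= K * nrm x) ->
  closedset (fun y => exists x, B x = y).
Proof. intros comp LB ap low bd u l hu cv.
 set (xs := fun n => proj1_sig (constructive_indefinite_description _ (hu n))).
 assert (hx : forall n, B (xs n) = u n) by (intro n; unfold xs; destruct (constructive_indefinite_description _ (hu n)); auto).
 clearbody xs.
 assert (cu : forall eps, eps > 0 -> exists N, forall n m, (n >= N)%nat -> (m >= N)%nat -> nrm (vsubH (xs n) (xs m)) < eps).
 { intros eps he. destruct (cv (a * eps / 2)) as [N hN]. apply Rlt_gt; apply Rmult_lt_0_compat; [nra|lra].
   exists N. intros n m hn hm. specialize (hN n hn) as h1. specialize (hN m hm) as h2. unfold Rdist in *.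
   rewrite Rminus_0_r in h1, h2. rewrite Rabs_right in h1, h2 by (apply Rle_ge, hnorm_ge0).
   pose proof (low (vsubH (xs n) (xs m))). rewrite lin_sub, hx, hx in H0 by auto.
   pose proof (hnorm_tri_sub H (u n) (u m) l). rewrite (hnorm_sub_sym H l (u m)) in H1.
   apply (Rmult_lt_reg_l a); auto. lra. }
 destruct (comp xs cu) as [x hxl]. exists x.
 apply vsub_eq0, hnorm_eq0. apply Rle_antisym; [|apply hnorm_ge0]. apply Rnot_lt_le; intro g.
 set (gg := nrm (vsubH (B x) l)) in *.
 destruct (cv (gg/2)) as [N1 h1]; [lra|]. destruct (hxl (gg / (2 * (Rabs K + 1)))) as [N2 h2].
 { apply Rlt_gt, Rdiv_lt_0_compat; [lra|]. pose proof (Rabs_pos K); lra. }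
 set (n := max N1 N2). specialize (h1 n (Nat.le_max_l _ _)). specialize (h2 n (Nat.le_max_r _ _)).
 unfold Rdist in *. rewrite Rminus_0_r in h1, h2. rewrite Rabs_right in h1, h2 by (apply Rle_ge, hnorm_ge0).
 pose proof (bd (vsubH (xs n) x)). rewrite lin_sub, hx in H0 by auto.
 pose proof (hnorm_tri_sub H (B x) l (u n)). rewrite (hnorm_sub_sym H (B x) (u n)) in H1. fold gg in H1.
 pose proof (Rle_abs K). pose proof (Rabs_pos K). pose proof (hnorm_ge0 H (vsubH (xs n) x)).
 assert (K * nrm (vsubH (xs n) x) <= (Rabs K + 1) * (gg / (2 * (Rabs K + 1)))).
 { apply Rle_trans with ((Rabs K + 1) * nrm (vsubH (xs n) x)). nra. apply Rmult_le_compat_l; lra. }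
 assert ((Rabs K + 1) * (gg / (2 * (Rabs K + 1))) = gg / 2) by (field; lra). lra. Qed.

Lemma two_sided_inv (B B' : H -> H) a b K : complete_space H -> linH H B -> 0 < a -> 0 < b ->
  (forall x, a * nrm x <= nrm (B x)) -> (forall x, nrm (B x) <= K * nrm x) ->
  (forall y, b * nrm y <= nrm (B' y)) -> (forall x y, inner (B x) y = inner x (B' y)) ->
  exists Rv, bounded_inverse_on H fullset B Rv.
Proof. intros comp LB ap bp low bd lowb adj.
 apply (@mk_inverse H fullset B a subsp_full LB (fun _ _ => I) ap); auto.
 intros v _. apply NNPP. intro nv.
 destruct (proj_thm (fun y => exists x, B x = y) v comp) as [w [wn hw]].
 - repeat split. exists vzero; apply lin_zero; auto.
   intros x y [x1 <-] [y1 <-]. exists (vadd x1 y1); apply lin_add; auto.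
   intros c x [x1 <-]. exists (vscal c x1); apply lin_scal; auto.
 - exact (@range_closed B a K comp LB ap low bd).
 - intros [x hx]. apply nv. exists x; split; auto. exact I.
 - apply wn. apply hnorm_eq0. assert (B' w = vzero).
   { apply inner_def. rewrite <- adj. rewrite hw. reflexivity. exists (B' w); auto. }
   pose proof (lowb w). rewrite H0, hnorm_zero in H1. pose proof (hnorm_ge0 H w). nra. Qed.

(* Riesz: existence of adjoint *)
Lemma adjoint_exists (T : H -> H) : complete_space H -> is_bounded_operator H T ->
  exists Ts, is_bounded_operator H Ts /\ is_adjoint H T Ts.
Proof. intros comp [LT [K hK]].
 assert (ex : forall y, exists u, forall x, inner (T x) y = inner x u).
 { intro y. set (phi := fun x => inner (T x) y).
   destruct (classic (forall x, phi x = C0)) as [all|nall].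
   - exists vzero. intro x. rewrite inner_zr. apply all.
   - apply not_all_ex_not in nall. destruct nall as [w0 hw0].
     destruct (proj_thm (fun x => phi x = C0) w0 comp) as [v [vn hv]]; auto.
     + repeat split; unfold phi. rewrite lin_zero, inner_zl; auto.
       intros x y' h1 h2. rewrite lin_add, inner_addl, h1, h2 by auto. apply Cx_ext; simpl; ring.
       intros a x h1. rewrite lin_scal, inner_scall, h1 by auto. apply Cx_ext; simpl; ring.
     + intros u l hu cv. unfold phi in *. apply Cn2_zero. apply Rle_antisym; [|apply Cn2_ge0].
       apply Rnot_lt_le; intro g.
       assert (forall n, inner (T l) y = inner (T (vsubH l (u n))) y).
       { intro n. rewrite lin_sub by auto. unfold vsub. rewrite inner_addl, inner_oppl, hu by auto.
         apply Cx_ext; simpl; ring. }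
       set (c := Cn2 (inner (T l) y)) in *.
       assert (bb : forall n, c <= (K * nrm (vsubH l (u n)) * nrm y) * (K * nrm (vsubH l (u n)) * nrm y)).
       { intro n. unfold c. rewrite (H0 n). pose proof (CS_abs H (T (vsubH l (u n))) y).
         unfold Cabs in H1. pose proof (hK (vsubH l (u n))). pose proof (hnorm_ge0 H y).
         pose proof (sqrt_pos (Cn2 (inner (T (vsubH l (u n))) y))). rewrite <- (sqrt_sqrt (Cn2 _)) by apply Cn2_ge0.
         pose proof (hnorm_ge0 H (T (vsubH l (u n)))).
         set (s := sqrt (Cn2 (inner (T (vsubH l (u n))) y))) in *.
         assert (s <= K * nrm (vsubH l (u n)) * nrm y).
         { apply Rle_trans with (1 := H1). apply Rmult_le_compat_r; auto. }
         apply Rmult_le_compat; auto. }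
       set (Q := Rabs K * nrm y + 1).
       destruct (cv (sqrt c / Q)) as [N hN].
       { apply Rlt_gt, Rdiv_lt_0_compat. apply sqrt_lt_R0; lra. unfold Q; pose proof (Rabs_pos K); pose proof (hnorm_ge0 H y); nra. }
       specialize (hN N (le_n _)). unfold Rdist in hN. rewrite Rminus_0_r, Rabs_right in hN by (apply Rle_ge, hnorm_ge0).
       rewrite hnorm_sub_sym in hN. specialize (bb N). set (t := nrm (vsubH l (u N))) in *.
       pose proof (hnorm_ge0 H (vsubH l (u N))). fold t in H1. pose proof (Rabs_pos K). pose proof (Rle_abs K).
       pose proof (hnorm_ge0 H y). pose proof (sqrt_lt_R0 c g).
       assert (Qp : 0 < Q) by (unfold Q; nra).
       assert (t * Q < sqrt c). { apply (Rmult_lt_reg_r (/ Q)). apply Rinv_0_lt_compat; auto.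
         rewrite Rmult_assoc, Rinv_r by lra. lra. }
       assert (Rabs (K * t * nrm y) < sqrt c). { rewrite !Rabs_mult, (Rabs_right t), (Rabs_right (nrm y)) by lra.
         unfold Q in H6. nra. }
       assert (c <= Rabs (K * t * nrm y) * Rabs (K * t * nrm y)). { rewrite <- Rabs_mult, Rabs_right by nra. nra. }
       pose proof (Rabs_pos (K * t * nrm y)). pose proof (sqrt_sqrt c). nra.
     + exists (vscal (Cmul (Cconj (phi v)) (RC (/ Cre (inner v v)))) v). intro x.
       assert (Kc : phi (vsubH (vscal (phi v) x) (vscal (phi x) v)) = C0).
       { unfold phi. rewrite lin_sub, !lin_scal by auto. unfold vsub. rewrite inner_addl, inner_oppl, !inner_scall.
         apply Cx_ext; simpl; ring. }
       specialize (hv _ Kc). unfold vsub in hv. rewrite inner_addl, inner_oppl, !inner_scall in hv.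
       assert (vp : 0 < Cre (inner v v)). { pose proof (hnorm_pos H v vn). rewrite <- hnorm_sq. nra. }
       rewrite inner_scalr. fold (phi x).
       pose proof (inner_self_im H v). destruct (inner v v) as [n1 n2]. simpl in *. subst n2.
       destruct (phi v) as [p1 p2], (phi x) as [q1 q2], (inner x v) as [r1 r2].
       unfold Cmul, Cadd, Copp, Cconj in hv |- *. simpl in *. injection hv; intros.
       assert (e1 : p1*r1 - p2*r2 = q1*n1) by lra. assert (e2 : p1*r2 + p2*r1 = q2*n1) by lra.
       apply Cx_ext; simpl.
       * replace ((p1 * / n1 - - p2 * 0) * r1 - - (p1 * 0 + - p2 * / n1) * r2) with ((p1*r1 - p2*r2) / n1) by (field; lra).
         rewrite e1; field; lra.
       * replace ((p1 * / n1 - - p2 * 0) * r2 + - (p1 * 0 + - p2 * / n1) * r1) with ((p1*r2 + p2*r1) / n1) by (field; lra).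
         rewrite e2; field; lra. }
 set (Ts := fun y => proj1_sig (constructive_indefinite_description _ (ex y))).
 assert (hTs : forall x y, inner (T x) y = inner x (Ts y)).
 { intros x y. unfold Ts. destruct (constructive_indefinite_description _ (ex y)); simpl; auto. }
 clearbody Ts. exists Ts. split; [split; [split|]|]; auto.
 - intros y1 y2. apply inner_ext. intro x. rewrite <- hTs, inner_addr, inner_addr, <- !hTs; auto.
 - intros a y. apply inner_ext. intro x. rewrite <- hTs, inner_scalr, inner_scalr, <- hTs; auto.
 - exists (Rabs K). intro y. pose proof (hTs (Ts y) y). pose proof (hnorm_sq H (Ts y)).
   rewrite <- H0 in H1. pose proof (CS_re H (T (Ts y)) y). pose proof (hK (Ts y)).
   pose proof (hnorm_ge0 H (Ts y)). pose proof (hnorm_ge0 H y). pose proof (Rle_abs K). pose proof (hnorm_ge0 H (T (Ts y))).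
   destruct (Req_dec (nrm (Ts y)) 0) as [z|nz]. rewrite z; pose proof (Rabs_pos K); nra.
   apply (Rmult_le_reg_l (nrm (Ts y))). lra.
   assert (nrm (T (Ts y)) * nrm y <= K * nrm (Ts y) * nrm y) by (apply Rmult_le_compat_r; auto).
   assert (K * nrm (Ts y) * nrm y <= Rabs K * nrm (Ts y) * nrm y) by (apply Rmult_le_compat_r; auto; apply Rmult_le_compat_r; auto).
   lra. Qed.
End HE.


Lemma floor_nat (q : R) : 0 <= q -> exists i : nat, INR i <= q < INR i + 1.
Proof. intro hq. destruct (base_Int_part q) as [h1 h2].
 assert (0 <= Int_part q)%Z. { apply le_IZR. apply Rnot_lt_le. intro l. apply lt_IZR in l.
   assert (Int_part q <= -1)%Z by lia. apply IZR_le in H. lra. }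
 exists (Z.to_nat (Int_part q)). rewrite INR_IZR_INZ, Z2Nat.id by auto. lra. Qed.

Lemma abs_inv a b : Rabs a <= b -> -b <= a <= b.
Proof. intro h. pose proof (Rle_abs a). pose proof (Rle_abs (-a)). rewrite Rabs_Ropp in H0. lra. Qed.

Lemma fin_common (Rel : nat -> nat -> Prop) (A : nat) :
  (forall i, (i < A)%nat -> exists N, forall n, (n >= N)%nat -> Rel i n) ->
  exists N, forall i, (i < A)%nat -> forall n, (n >= N)%nat -> Rel i n.
Proof. induction A; intros h. exists O; intros; lia.
 destruct IHA as [N1 h1]. intros i hi; apply h; lia. destruct (h A (Nat.lt_succ_diag_r A)) as [N2 h2].
 exists (max N1 N2). intros i hi n hn. destruct (Nat.eq_dec i A). subst; apply h2; lia. apply h1; lia. Qed.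

Lemma grid_round (r : R) (G : nat) : (0 < G)%nat -> -1 <= r <= 1 ->
  exists i, (i <= 2 * G)%nat /\ Rabs (r - (INR i - INR G) / INR G) <= / INR G.
Proof. intros hG hr. assert (gp : 0 < INR G) by (apply lt_0_INR; auto).
 destruct (floor_nat ((r + 1) * INR G)) as [i [h1 h2]]. nra.
 exists i. split.
 - assert (INR i <= 2 * INR G) by nra. assert (INR i <= INR (2 * G)) by (rewrite mult_INR; simpl; lra).
   apply INR_le; auto.
 - replace (r - (INR i - INR G) / INR G) with (((r+1) * INR G - INR i) / INR G) by (field; lra).
   unfold Rdiv. rewrite Rabs_mult. pose proof (Rinv_0_lt_compat _ gp).
   rewrite (Rabs_right (/ INR G)) by lra. rewrite Rabs_right by lra. nra. Qed.

Lemma grid_round01 (r : R) (G : nat) : (0 < G)%nat -> 0 <= r <= 1 ->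
  exists k, (k <= G)%nat /\ Rabs (r - INR k / INR G) <= / INR G.
Proof. intros hG hr. assert (gp : 0 < INR G) by (apply lt_0_INR; auto).
 destruct (floor_nat (r * INR G)) as [i [h1 h2]]. nra.
 exists i. split.
 - assert (INR i <= INR G) by nra. apply INR_le; auto.
 - replace (r - INR i / INR G) with ((r * INR G - INR i) / INR G) by (field; lra).
   unfold Rdiv. rewrite Rabs_mult. pose proof (Rinv_0_lt_compat _ gp).
   rewrite (Rabs_right (/ INR G)) by lra. rewrite Rabs_right by lra. nra. Qed.

Section HF.
Variable H : HilbertSpace.
Local Notation nrm := (hnorm H).
Local Notation vsubH := (vsub H).
Variable T : H -> H.
Variable K : R.
Hypothesis LT : linH H T.
Hypothesis hK : forall x, nrm (T x) <= K * nrm x.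
Hypothesis K0 : 0 <= K.
Variable Mn : nat -> H -> Prop.
Hypothesis hmono : forall n m y, (n <= m)%nat -> Mn n y -> Mn m y.
Hypothesis hscal : forall n a y, Mn n y -> Mn n (vscal a y).
Hypothesis hdense : forall x eps, eps > 0 -> exists n y, Mn n y /\ nrm (vsubH x y) < eps.

Definition psi (s1 s2 t : R) (x : H) : R :=
  -2 * (s1 * Cre (inner (T x) x) + s2 * Cim (inner (T x) x)) + t * (nrm (T x) * nrm (T x)).

Lemma re_le_abs (a : Cx) : Rabs (Cre a) <= Cabs a /\ Rabs (Cim a) <= Cabs a.
Proof. unfold Cabs, Cn2. split; apply sq_le_sq; try apply sqrt_pos; rewrite sqrt_sqrt by nra;
 rewrite <- Rabs_mult, Rabs_right by nra; nra. Qed.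

Lemma c_bound (x : H) : unitv H x -> Cabs (inner (T x) x) <= K.
Proof. intro u. pose proof (CS_abs H (T x) x). unfold unitv in u. rewrite u in H0. pose proof (hK x). rewrite u in H1. lra. Qed.

Lemma psi_lip (a1 a2 a3 b1 b2 b3 : R) (x : H) : unitv H x ->
  Rabs (psi a1 a2 a3 x - psi b1 b2 b3 x) <= 2 * K * Rabs (a1 - b1) + 2 * K * Rabs (a2 - b2) + K * K * Rabs (a3 - b3).
Proof. intro u. unfold psi. pose proof (c_bound x u). destruct (re_le_abs (inner (T x) x)) as [r1 r2].
 pose proof (hK x). unfold unitv in u. rewrite u in H1. pose proof (hnorm_ge0 H (T x)).
 set (c1 := Cre (inner (T x) x)) in *. set (c2 := Cim (inner (T x) x)) in *. set (n := nrm (T x)) in *.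
 replace (-2 * (a1 * c1 + a2 * c2) + a3 * (n * n) - (-2 * (b1 * c1 + b2 * c2) + b3 * (n * n)))
   with ((-2) * ((a1 - b1) * c1) + (-2) * ((a2 - b2) * c2) + (a3 - b3) * (n * n)) by ring.
 eapply Rle_trans. apply Rabs_triang. eapply Rle_trans. apply Rplus_le_compat_r, Rabs_triang.
 rewrite !Rabs_mult. rewrite (Rabs_left (-2)) by lra. rewrite (Rabs_right n) by lra.
 pose proof (Rabs_pos (a1 - b1)). pose proof (Rabs_pos (a2 - b2)). pose proof (Rabs_pos (a3 - b3)).
 assert (Rabs c1 <= K) by lra. assert (Rabs c2 <= K) by lra. assert (n * n <= K * K) by nra.
 assert (- -2 * (Rabs (a1 - b1) * Rabs c1) <= 2 * K * Rabs (a1 - b1)) by nra.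
 assert (- -2 * (Rabs (a2 - b2) * Rabs c2) <= 2 * K * Rabs (a2 - b2)) by nra.
 assert (Rabs (a3 - b3) * (n * n) <= K * K * Rabs (a3 - b3)) by nra. lra. Qed.

Lemma psi_cont (s1 s2 t : R) (x x' : H) : Rabs s1 <= 1 -> Rabs s2 <= 1 -> 0 <= t <= 1 -> unitv H x -> unitv H x' ->
  Rabs (psi s1 s2 t x - psi s1 s2 t x') <= (8 * K + 2 * K * K) * nrm (vsubH x x').
Proof. intros h1 h2 ht u u'. unfold psi.
 set (d := vsubH x x'). pose proof (hnorm_ge0 H d).
 assert (ec : Cadd (inner (T x) x) (Copp (inner (T x') x')) = Cadd (inner (T d) x) (inner (T x') d)).
 { unfold d. rewrite lin_sub by auto. unfold vsub. rewrite inner_addl, inner_oppl, inner_addr, inner_oppr.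
   apply Cx_ext; simpl; ring. }
 assert (bc : Cabs (inner (T d) x) + Cabs (inner (T x') d) <= 2 * K * nrm d).
 { pose proof (CS_abs H (T d) x). pose proof (CS_abs H (T x') d). unfold unitv in u, u'. rewrite u in H1.
   pose proof (hK d). pose proof (hK x'). rewrite u' in H4. pose proof (hnorm_ge0 H (T x')).
   assert (nrm (T x') * nrm d <= K * nrm d) by (apply Rmult_le_compat_r; [auto|lra]). nra. }
 destruct (re_le_abs (inner (T d) x)) as [a1 a2]. destruct (re_le_abs (inner (T x') d)) as [b1 b2].
 assert (e1 : Cre (inner (T x) x) - Cre (inner (T x') x') = Cre (inner (T d) x) + Cre (inner (T x') d)).
 { pose proof (f_equal Cre ec). simpl in H1. lra. }
 assert (e2 : Cim (inner (T x) x) - Cim (inner (T x') x') = Cim (inner (T d) x) + Cim (inner (T x') d)).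
 { pose proof (f_equal Cim ec). simpl in H1. lra. }
 assert (nT : Rabs (nrm (T x) * nrm (T x) - nrm (T x') * nrm (T x')) <= 2 * K * K * nrm d).
 { pose proof (hnorm_rev_tri H (T x) (T x')). pose proof (hnorm_rev_tri H (T x') (T x)).
   rewrite (hnorm_sub_sym H (T x') (T x)) in H2. rewrite <- lin_sub in H1, H2 by auto. fold d in H1, H2.
   pose proof (hK d). pose proof (hK x). pose proof (hK x'). unfold unitv in u, u'. rewrite u in H4. rewrite u' in H5.
   pose proof (hnorm_ge0 H (T x)). pose proof (hnorm_ge0 H (T x')).
   replace (nrm (T x) * nrm (T x) - nrm (T x') * nrm (T x')) with ((nrm (T x) - nrm (T x')) * (nrm (T x) + nrm (T x'))) by ring.
   rewrite Rabs_mult, (Rabs_right (_ + _)) by lra. apply Rle_trans with ((K * nrm d) * (2 * K)).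
   apply Rmult_le_compat; try lra. apply Rabs_pos. apply Rabs_le; lra. lra. }
 set (c1 := Cre (inner (T x) x)) in *. set (c2 := Cim (inner (T x) x)) in *.
 set (c1' := Cre (inner (T x') x')) in *. set (c2' := Cim (inner (T x') x')) in *.
 replace (-2 * (s1 * c1 + s2 * c2) + t * (nrm (T x) * nrm (T x)) - (-2 * (s1 * c1' + s2 * c2') + t * (nrm (T x') * nrm (T x'))))
   with ((-2) * (s1 * (c1 - c1')) + (-2) * (s2 * (c2 - c2')) + t * (nrm (T x) * nrm (T x) - nrm (T x') * nrm (T x'))) by ring.
 rewrite e1, e2.
 eapply Rle_trans. apply Rabs_triang. eapply Rle_trans. apply Rplus_le_compat_r, Rabs_triang.
 rewrite !Rabs_mult. rewrite (Rabs_left (-2)) by lra. rewrite (Rabs_right t) by lra.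
 pose proof (Rabs_triang (Cre (inner (T d) x)) (Cre (inner (T x') d))).
 pose proof (Rabs_triang (Cim (inner (T d) x)) (Cim (inner (T x') d))).
 pose proof (Rabs_pos s1). pose proof (Rabs_pos s2).
 set (q1 := Rabs (Cre (inner (T d) x) + Cre (inner (T x') d))) in *.
 set (q2 := Rabs (Cim (inner (T d) x) + Cim (inner (T x') d))) in *.
 assert (q1 <= 2 * K * nrm d) by lra. assert (q2 <= 2 * K * nrm d) by lra.
 assert (0 <= q1) by (unfold q1; apply Rabs_pos). assert (0 <= q2) by (unfold q2; apply Rabs_pos).
 assert (Rabs s1 * q1 <= 2 * K * nrm d) by nra.
 assert (Rabs s2 * q2 <= 2 * K * nrm d) by nra.
 assert (t * Rabs (nrm (T x) * nrm (T x) - nrm (T x') * nrm (T x')) <= 2 * K * K * nrm d).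
 { pose proof (Rabs_pos (nrm (T x) * nrm (T x) - nrm (T x') * nrm (T x'))). nra. }
 lra. Qed.

Lemma approx_unit (x : H) (d : R) : unitv H x -> 0 < d <= 1/2 ->
  exists n x', Mn n x' /\ unitv H x' /\ nrm (vsubH x x') <= 2 * d.
Proof. intros u hd. destruct (hdense x d) as [n [y [My hy]]]; [lra|].
 pose proof (hnorm_rev_tri H x y). pose proof (hnorm_rev_tri H y x). rewrite hnorm_sub_sym in H1.
 unfold unitv in u. rewrite u in H0, H1.
 assert (yn : y <> vzero). { intro e. subst. rewrite hnorm_zero in H0. lra. }
 exists n, (vscal (RC (/ nrm y)) y). split; [apply hscal; auto| split; [apply normalize; auto|]].
 pose proof (hnorm_tri_sub H x (vscal (RC (/ nrm y)) y) y).
 assert (nrm (vsubH y (vscal (RC (/ nrm y)) y)) = Rabs (nrm y - 1)).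
 { pose proof (hnorm_pos H y yn).
   replace (vsubH y (vscal (RC (/ nrm y)) y)) with (vscal (RC (1 - / nrm y)) y).
   rewrite hnorm_scalR. replace (nrm y - 1) with ((1 - / nrm y) * nrm y) by (field; lra).
   rewrite Rabs_mult, (Rabs_right (nrm y)); lra.
   unfold vsub. rewrite vopp_scal, vscal_assoc.
   replace (vadd y _) with (vadd (vscal C1 y) (vscal (Cmul (RC (-1)) (RC (/ nrm y))) y)) by (rewrite vscal_1; auto).
   rewrite <- vscal_adds. f_equal. apply Cx_ext; simpl; ring. }
 rewrite H3 in H2. assert (Rabs (nrm y - 1) <= d) by (apply Rabs_le; lra). lra. Qed.

Lemma psi_bound (s1 s2 t : R) (x : H) : Rabs s1 <= 1 -> Rabs s2 <= 1 -> 0 <= t <= 1 -> unitv H x ->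
  - psi s1 s2 t x <= 4 * K + K * K.
Proof. intros h1 h2 ht u. pose proof (psi_lip s1 s2 t 0 0 0 x u) as hl.
 assert (e0 : psi 0 0 0 x = 0) by (unfold psi; ring). rewrite e0 in hl.
 rewrite !Rminus_0_r in hl. pose proof (Rabs_pos t). pose proof (Rabs_pos s1).
 pose proof (Rle_abs (- psi s1 s2 t x)) as ha.
 rewrite Rabs_Ropp in ha. rewrite (Rabs_right t) in hl by lra. nra. Qed.

Lemma point_claim (s1 s2 t eta : R) : Rabs s1 <= 1 -> Rabs s2 <= 1 -> 0 <= t <= 1 -> eta > 0 ->
  (exists x, unitv H x) ->
  exists N, forall n, (n >= N)%nat -> forall x, unitv H x -> exists x', Mn n x' /\ unitv H x' /\ psi s1 s2 t x' <= psi s1 s2 t x + eta.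
Proof. intros h1 h2 ht he [x1 u1].
 set (E := fun r => exists x, unitv H x /\ r = - psi s1 s2 t x).
 assert (bE : bound E) by (exists (4 * K + K * K); intros r [x [ux ->]]; apply psi_bound; auto).
 assert (nE : exists r, E r) by (exists (- psi s1 s2 t x1), x1; auto).
 destruct (Rsup_approx E (eta / 2) bE nE) as [r [[x0 [u0 ->]] hr]]; [lra|].
 set (L := 8 * K + 2 * K * K).
 set (d := Rmin (1/2) (eta / (4 * (L + 1)))).
 assert (dp : 0 < d <= 1/2). { unfold d. split. apply Rmin_pos; [lra|]. apply Rdiv_lt_0_compat; [lra|unfold L; nra]. apply Rmin_l. }
 destruct (approx_unit x0 d u0 dp) as [N [x' [Mx' [u' hx']]]].
 exists N. intros n hn x ux. exists x'. split; [apply (hmono N); auto|split; auto].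
 pose proof (psi_cont s1 s2 t x0 x' h1 h2 ht u0 u').
 assert (L * nrm (vsubH x0 x') <= eta / 2).
 { assert (d <= eta / (4 * (L + 1))) by apply Rmin_r. assert (0 <= L) by (unfold L; nra).
   pose proof (hnorm_ge0 H (vsubH x0 x')).
   apply Rle_trans with (L * (2 * d)). apply Rmult_le_compat_l; auto.
   apply Rle_trans with (L * (2 * (eta / (4 * (L + 1))))). apply Rmult_le_compat_l; lra.
   replace (L * (2 * (eta / (4 * (L + 1))))) with ((eta / 2) * (L / (L + 1))) by (field; lra).
   assert (L / (L+1) <= 1). { apply (Rmult_le_reg_r (L+1)); [lra|]. unfold Rdiv; rewrite Rmult_assoc, Rinv_l by lra. lra. }
   nra. }
 pose proof (Rsup_ub E (- psi s1 s2 t x) bE (ex_intro _ x (conj ux eq_refl))).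
 pose proof (Rle_abs (psi s1 s2 t x' - psi s1 s2 t x0)). rewrite Rabs_minus_sym in H0. fold L in H0. lra. Qed.

Lemma U_psi (eta : R) : eta > 0 -> (exists x, unitv H x) ->
  exists N, forall n, (n >= N)%nat -> forall s1 s2 t, Rabs s1 <= 1 -> Rabs s2 <= 1 -> 0 <= t <= 1 ->
  forall x, unitv H x -> exists x', Mn n x' /\ unitv H x' /\ psi s1 s2 t x' <= psi s1 s2 t x + eta.
Proof. intros he nt. set (L := 4 * K + K * K).
 destruct (small_inv (eta / (4 * (L + 1)))) as [g hg]. apply Rlt_gt, Rdiv_lt_0_compat; [lra| unfold L; nra].
 set (G := S g). specialize (hg g (le_n _)). assert (eG : INR G = INR g + 1) by (unfold G; rewrite S_INR; auto).
 assert (Gp : (0 < G)%nat) by (unfold G; lia). assert (gp : 0 < INR G) by (apply lt_0_INR; auto).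
 set (gv := fun i => (INR i - INR G) / INR G).
 assert (gvb : forall i, (i <= 2 * G)%nat -> Rabs (gv i) <= 1).
 { intros i hi. apply le_INR in hi. rewrite mult_INR in hi. change (INR 2) with (1+1) in hi. pose proof (pos_INR i). unfold gv.
   idtac.
   apply Rabs_le. split; apply (Rmult_le_reg_r (INR G)); auto; unfold Rdiv; rewrite Rmult_assoc, Rinv_l by lra; lra. }
 assert (tvb : forall k, (k <= G)%nat -> 0 <= INR k / INR G <= 1).
 { intros k hk. apply le_INR in hk. pose proof (pos_INR k). split. unfold Rdiv; apply Rmult_le_pos; [lra|apply Rlt_le, Rinv_0_lt_compat; lra].
   apply (Rmult_le_reg_r (INR G)); auto; unfold Rdiv; rewrite Rmult_assoc, Rinv_l by lra; lra. }
 destruct (fin_common (fun i n => forall j, (j < S (2 * G))%nat -> forall k, (k < S G)%nat -> forall x, unitv H x ->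
    exists x', Mn n x' /\ unitv H x' /\ psi (gv i) (gv j) (INR k / INR G) x' <= psi (gv i) (gv j) (INR k / INR G) x + eta / 2) (S (2 * G)))
   as [N hN].
 { intros i hi. destruct (fin_common (fun j n => forall k, (k < S G)%nat -> forall x, unitv H x ->
    exists x', Mn n x' /\ unitv H x' /\ psi (gv i) (gv j) (INR k / INR G) x' <= psi (gv i) (gv j) (INR k / INR G) x + eta / 2) (S (2 * G)))
   as [N1 hN1].
   { intros j hj. destruct (fin_common (fun k n => forall x, unitv H x ->
     exists x', Mn n x' /\ unitv H x' /\ psi (gv i) (gv j) (INR k / INR G) x' <= psi (gv i) (gv j) (INR k / INR G) x + eta / 2) (S G))
     as [N2 hN2].
     { intros k hk. apply point_claim; auto; try lra. apply gvb; lia. apply gvb; lia. apply tvb; lia. }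
     exists N2. intros n hn k hk. apply hN2; auto. }
   exists N1. intros n hn j hj k hk. apply hN1; auto. }
 exists N. intros n hn s1 s2 t h1 h2 ht x ux.
 destruct (grid_round s1 G Gp) as [i [hi ri]]. apply abs_inv; auto.
 destruct (grid_round s2 G Gp) as [j [hj rj]]. apply abs_inv; auto.
 destruct (grid_round01 t G Gp) as [k [hk rk]]; auto.
 destruct (hN i ltac:(lia) n hn j ltac:(lia) k ltac:(lia) x ux) as [x' [Mx' [u' hx']]].
 exists x'. split; auto. split; auto. fold (gv i) in ri. fold (gv j) in rj.
 pose proof (psi_lip s1 s2 t (gv i) (gv j) (INR k / INR G) x ux).
 pose proof (psi_lip s1 s2 t (gv i) (gv j) (INR k / INR G) x' u').
 assert (bnd : 2 * K * Rabs (s1 - gv i) + 2 * K * Rabs (s2 - gv j) + K * K * Rabs (t - INR k / INR G) <= eta / 4).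
 { assert (0 <= / INR G) by (apply Rlt_le, Rinv_0_lt_compat; auto).
   apply Rle_trans with (L * / INR G). unfold L. nra.
   rewrite eG. apply Rle_trans with (L * (eta / (4 * (L + 1)))). apply Rmult_le_compat_l. unfold L; nra. lra.
   replace (L * (eta / (4 * (L + 1)))) with ((eta / 4) * (L / (L + 1))) by (field; unfold L; nra).
   assert (L / (L+1) <= 1). { apply (Rmult_le_reg_r (L+1)); [unfold L; nra|]. unfold Rdiv; rewrite Rmult_assoc, Rinv_l by (unfold L; nra). unfold L; nra. }
   nra. }
 pose proof (Rle_abs (psi s1 s2 t x' - psi (gv i) (gv j) (INR k / INR G) x')) as q1.
 pose proof (Rle_abs (psi (gv i) (gv j) (INR k / INR G) x - psi s1 s2 t x)) as q2.
 rewrite Rabs_minus_sym in q2. lra. Qed.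
Lemma shift_sq (z : Cx) (x : H) : unitv H x ->
  nrm (shift H T z x) * nrm (shift H T z x) =
  nrm (T x) * nrm (T x) - 2 * (Cre z * Cre (inner (T x) x) + Cim z * Cim (inner (T x) x)) + Cn2 z.
Proof. intro u. unfold shift. rewrite hnorm_sq, expand_sub, <- hnorm_sq, <- (hnorm_sq H x).
 unfold unitv in u. rewrite u. simpl. ring. Qed.

Lemma U_norm (eps : R) : eps > 0 -> (exists x, unitv H x) ->
  exists N, forall n, (n >= N)%nat -> forall z x, unitv H x ->
  exists x', Mn n x' /\ unitv H x' /\ nrm (shift H T z x') <= nrm (shift H T z x) + eps.
Proof. intros he nt. set (eta := Rmin eps (eps * eps / (2 * K + 2))).
 assert (etap : eta > 0). { unfold eta. apply Rmin_pos; [lra|]. apply Rdiv_lt_0_compat; nra. }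
 destruct (U_psi eta etap nt) as [N hN]. exists N. intros n hn z x ux.
 set (a := Cabs z). assert (a0 : 0 <= a) by apply sqrt_pos.
 assert (aa : a * a = Cn2 z) by (apply sqrt_sqrt, Cn2_ge0).
 set (t := / (1 + a)). assert (tp : 0 < t) by (apply Rinv_0_lt_compat; lra).
 assert (ta : t * (1 + a) = 1) by (unfold t; field; lra).
 destruct (re_le_abs z) as [z1 z2]. fold a in z1, z2.
 assert (b1 : Rabs (Cre z * t) <= 1). { rewrite Rabs_mult, (Rabs_right t) by lra. nra. }
 assert (b2 : Rabs (Cim z * t) <= 1). { rewrite Rabs_mult, (Rabs_right t) by lra. nra. }
 assert (bt : 0 <= t <= 1) by nra.
 destruct (hN n hn (Cre z * t) (Cim z * t) t b1 b2 bt x ux) as [x' [Mx' [u' hx']]].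
 exists x'. split; auto. split; auto.
 assert (rel : forall y, unitv H y -> nrm (shift H T z y) * nrm (shift H T z y) = Cn2 z + (1 + a) * psi (Cre z * t) (Cim z * t) t y).
 { intros y uy. rewrite shift_sq by auto. unfold psi.
   replace ((1 + a) * (-2 * (Cre z * t * Cre (inner (T y) y) + Cim z * t * Cim (inner (T y) y)) + t * (nrm (T y) * nrm (T y))))
     with ((t * (1 + a)) * (-2 * (Cre z * Cre (inner (T y) y) + Cim z * Cim (inner (T y) y)) + (nrm (T y) * nrm (T y)))) by ring.
   rewrite ta. ring. }
 assert (key : nrm (shift H T z x') * nrm (shift H T z x') <= nrm (shift H T z x) * nrm (shift H T z x) + (1 + a) * eta).
 { rewrite !rel by auto. nra. }
 set (A := nrm (shift H T z x)) in *. set (A' := nrm (shift H T z x')) in *.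
 assert (A0 : 0 <= A) by apply hnorm_ge0. assert (A'0 : 0 <= A') by apply hnorm_ge0.
 assert (e1 : eta <= eps) by apply Rmin_l. assert (e2 : eta <= eps * eps / (2 * K + 2)) by apply Rmin_r.
 destruct (Rle_lt_dec a (2 * K + 1)) as [sm|lg].
 - assert ((1 + a) * eta <= eps * eps). { apply Rle_trans with ((2 * K + 2) * (eps * eps / (2 * K + 2))).
     apply Rmult_le_compat; lra. right; field; lra. }
   apply sq_le_sq; [lra|]. nra.
 - assert (Alow : a - K <= A). { unfold A, shift. pose proof (hnorm_rev_tri H (vscal z x) (T x)).
     rewrite hnorm_sub_sym in H0. rewrite hnorm_scal in H0. unfold unitv in ux. rewrite ux in H0.
     pose proof (hK x). rewrite ux in H1. fold a in H0. lra. }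
   assert ((1 + a) * eta <= 2 * A * eta) by (apply Rmult_le_compat_r; lra).
   apply sq_le_sq; [lra|]. nra. Qed.
End HF.


Section HG.
Variable H : HilbertSpace.
Local Notation nrm := (hnorm H).
Local Notation vsubH := (vsub H).

Lemma proj_lin P : orth_projection H P -> linH H P.
Proof. intros [[L _] _]; exact L. Qed.
Lemma proj_fix P y : orth_projection H P -> range H P y -> P y = y.
Proof. intros [_ [idem _]] [x <-]. apply idem. Qed.
Lemma proj_in P x : range H P (P x).
Proof. exists x; auto. Qed.
Lemma proj_subsp P : orth_projection H P -> subsp H (range H P).
Proof. intro OP. pose proof (proj_lin P OP) as L. repeat split.
 - exists vzero. apply lin_zero; auto.
 - intros x y [x1 <-] [y1 <-]. exists (vadd x1 y1). apply lin_add; auto.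
 - intros a x [x1 <-]. exists (vscal a x1). apply lin_scal; auto. Qed.
Lemma proj_contr P v : orth_projection H P -> nrm (P v) <= nrm v.
Proof. intros OP. pose proof OP as [[L _] [idem adj]].
 assert (e : v = vadd (P v) (vsubH v (P v))) by (rewrite vadd_comm, vsub_add; auto).
 assert (o : Cre (inner (P v) (vsubH v (P v))) = 0).
 { unfold vsub. rewrite inner_addr, inner_oppr. rewrite (adj v (P v)), idem, (adj v v). simpl. ring. }
 apply sq_le_sq. apply hnorm_ge0. rewrite !hnorm_sq.
 replace (Cre (inner v v)) with (Cre (inner (vadd (P v) (vsubH v (P v))) (vadd (P v) (vsubH v (P v))))) by (rewrite <- e; auto).
 rewrite expand_add, o.
 pose proof (inner_pos (vsubH v (P v))). lra. Qed.

Lemma shift_proj P A z x : orth_projection H P -> range H P x ->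
  shift H (fun y => P (A y)) z x = P (shift H A z x).
Proof. intros OP Rx. pose proof (proj_lin P OP) as L. unfold shift. rewrite (lin_sub H P (A x) (vscal z x) L), (lin_scal H P z x L), (proj_fix P x OP Rx). auto. Qed.

Lemma vrearr (a b c : H) : vadd (vadd a b) (vadd c (vopp a)) = vadd c b.
Proof. rewrite (vadd_comm c (vopp a)). rewrite vadd_assoc. rewrite <- (vadd_assoc a b (vopp a)).
 rewrite (vadd_comm b (vopp a)), vadd_assoc, vadd_oppr, vadd_0, vadd_comm. auto. Qed.

Lemma shift_proj_low P A z x : shift H A z x = vadd (shift H (fun y => P (A y)) z x) (vsubH (A x) (P (A x))).
Proof. unfold shift, vsub. cbv beta. symmetry. apply vrearr. Qed.

Lemma proj_adj_comp P A A' : orth_projection H P -> (forall x y, inner (A x) y = inner x (A' y)) ->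
  forall u v, range H P u -> range H P v -> inner (P (A u)) v = inner u (P (A' v)).
Proof. intros OP adj u v Ru Rv. pose proof OP as [_ [_ pa]].
 rewrite pa, (proj_fix P v OP Rv), adj. rewrite <- (proj_fix P u OP Ru) at 1. rewrite pa. auto. Qed.

Lemma fd_inverse (M : H -> Prop) (B : H -> H) k (e : nat -> H) c : subsp H M -> linH H B -> invariant H M B ->
  (forall y, M y -> span H k e y) -> 0 < c -> (forall x, M x -> c * nrm x <= nrm (B x)) ->
  exists Rv, bounded_inverse_on H M B Rv /\ forall y, M y -> nrm (Rv y) <= / c * nrm y.
Proof. intros SM LB IB sp cp low.
 assert (inj : forall x, M x -> B x = vzero -> x = vzero).
 { intros x Mx e0. apply hnorm_eq0. pose proof (low x Mx). rewrite e0, hnorm_zero in H0. pose proof (hnorm_ge0 H x). nra. }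
 destruct (mk_inverse H M B c SM LB IB cp low (fd_surj H M B k e SM LB IB sp inj)) as [Rv HR].
 exists Rv. split; auto. intros y My. destruct HR as [h1 [h2 [h3 _]]]. specialize (low _ (h1 y My)). rewrite h3 in low by auto.
 apply (Rmult_le_reg_l c); auto. rewrite <- Rmult_assoc, Rinv_r by lra. lra. Qed.

Lemma psi_lower_fd (M : H -> Prop) (A : H -> H) z k (e : nat -> H) c : subsp H M -> linH H A -> invariant H M A ->
  (forall y, M y -> span H k e y) -> nontriv H M -> 0 < c -> (forall x, M x -> c * nrm x <= nrm (shift H A z x)) ->
  c <= Psi_on H M A z.
Proof. intros SM LA IA sp nt cp low. pose proof SM as [M0 [Ma Ms]].
 assert (IB : invariant H M (shift H A z)). { intros x Mx. unfold shift, vsub. apply Ma; auto. rewrite vopp_scal. apply Ms, Ms; auto. }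
 destruct (fd_inverse M (shift H A z) k e c SM (shift_lin H A z LA) IB sp cp low) as [Rv [HR _]].
 apply Psi_lower; eauto. Qed.

Lemma psi_self_low (M : H -> Prop) A z : subsp H M -> linH H A -> invariant H M A -> nontriv H M ->
  forall x, M x -> Psi_on H M A z * nrm x <= nrm (shift H A z x).
Proof. intros SM LA IA nt x Mx. destruct (classic (exists Rv, bounded_inverse_on H M (shift H A z) Rv)) as [h|h].
 - apply (Psi_facts H M A z SM LA IA nt h); auto.
 - rewrite Psi_noinv by auto. rewrite Rmult_0_l. apply hnorm_ge0. Qed.

Lemma psi_adj_low (M : H -> Prop) A A' z : subsp H M -> linH H A -> invariant H M A -> nontriv H M ->
  (forall u v, M u -> M v -> inner (A u) v = inner u (A' v)) ->
  forall y, M y -> Psi_on H M A z * nrm y <= nrm (shift H A' (Cconj z) y).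
Proof. intros SM LA IA nt adj y My. destruct (classic (exists Rv, bounded_inverse_on H M (shift H A z) Rv)) as [h|h].
 - destruct (Psi_facts H M A z SM LA IA nt h) as [pp [low _]]. destruct h as [Rv HR]. pose proof HR as [h1 [h2 [h3 _]]].
   assert (bR : forall y, M y -> nrm (Rv y) <= / Psi_on H M A z * nrm y).
   { intros y0 My0. specialize (low _ (h1 y0 My0)). rewrite h3 in low by auto.
     apply (Rmult_le_reg_l (Psi_on H M A z)); auto. rewrite <- Rmult_assoc, Rinv_r by lra. lra. }
   pose proof (adj_low H M (shift H A z) Rv (shift H A' (Cconj z)) (/ Psi_on H M A z)) as al.
   specialize (al (Rlt_le _ _ (Rinv_0_lt_compat _ pp))). specialize (al (fun y0 My0 => conj (h1 y0 My0) (h3 y0 My0)) bR).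
   specialize (al (shift_adj H M A A' z adj) y My).
   apply (Rmult_le_reg_l (/ Psi_on H M A z)). apply Rinv_0_lt_compat; auto.
   rewrite <- Rmult_assoc, Rinv_l by lra. lra.
 - rewrite Psi_noinv by auto. rewrite Rmult_0_l. apply hnorm_ge0. Qed.

Lemma transfer_low (M : H -> Prop) (B' B : H -> H) k (e : nat -> H) c : subsp H M -> linH H B' -> invariant H M B' ->
  (forall y, M y -> span H k e y) -> 0 < c -> (forall y, M y -> c * nrm y <= nrm (B' y)) ->
  (forall u v, M u -> M v -> inner (B' u) v = inner u (B v)) ->
  forall v, M v -> c * nrm v <= nrm (B v).
Proof. intros SM LB IB sp cp low adj v Mv.
 destruct (fd_inverse M B' k e c SM LB IB sp cp low) as [Rv [[h1 [h2 [h3 _]]] bR]].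
 pose proof (adj_low H M B' Rv B (/ c) (Rlt_le _ _ (Rinv_0_lt_compat _ cp)) (fun y My => conj (h1 y My) (h3 y My)) bR adj v Mv).
 apply (Rmult_le_reg_l (/ c)). apply Rinv_0_lt_compat; auto. rewrite <- Rmult_assoc, Rinv_l by lra. lra. Qed.

Lemma unit_low (B : H -> H) a : linH H B -> 0 <= a -> (forall x, unitv H x -> a <= nrm (B x)) -> forall x, a * nrm x <= nrm (B x).
Proof. intros LB a0 h x. destruct (classic (x = vzero)) as [e|ne].
 - subst. rewrite hnorm_zero. rewrite Rmult_0_r. apply hnorm_ge0.
 - specialize (h _ (normalize H x ne)). rewrite lin_scal, hnorm_scalR in h by auto. pose proof (hnorm_pos H x ne).
   rewrite Rabs_right in h by (apply Rle_ge, Rlt_le, Rinv_0_lt_compat; auto).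
   apply (Rmult_le_reg_l (/ nrm x)). apply Rinv_0_lt_compat; auto. rewrite <- Rmult_assoc, (Rmult_comm _ a), Rmult_assoc, Rinv_l by lra. lra. Qed.
End HG.


Lemma lin_comp (H : HilbertSpace) (A B : H -> H) : linH H A -> linH H B -> linH H (fun x => A (B x)).
Proof. intros LA LB. split; intros. rewrite !lin_add; auto. rewrite !lin_scal; auto. Qed.

Lemma subsp_fullH (H : HilbertSpace) : subsp H (full H).
Proof. repeat split. Qed.

Lemma Cconj_conj z : Cconj (Cconj z) = z.
Proof. apply Cx_ext; simpl; ring. Qed.

Lemma lin_vsub (H : HilbertSpace) (F G : H -> H) : linH H F -> linH H G -> linH H (fun x => vsub H (F x) (G x)).
Proof. intros LF LG. split.
 - intros x y. rewrite (lin_add H F x y LF), (lin_add H G x y LG). unfold vsub. rewrite vopp_vadd.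
   rewrite <- !vadd_assoc. f_equal. rewrite !vadd_assoc. f_equal. apply vadd_comm.
 - intros a x. rewrite (lin_scal H F a x LF), (lin_scal H G a x LG). unfold vsub. rewrite vscal_addv. f_equal.
   rewrite !vopp_scal, !vscal_assoc. f_equal. apply Cx_ext; simpl; ring. Qed.

Lemma qt_est (H : HilbertSpace) (A P : H -> H) K : linH H A -> orth_projection H P ->
  (forall x, hnorm H (A x) <= K * hnorm H x) ->
  forall x, range H P x -> hnorm H (vsub H (A x) (P (A x))) <= opnorm H (fun x => vsub H (A (P x)) (P (A (P x)))) * hnorm H x.
Proof. intros LA OP hK x Rx. pose proof (proj_lin H P OP) as LP.
 assert (LQ : linH H (fun x => vsub H (A (P x)) (P (A (P x))))).
 { apply lin_vsub. apply lin_comp; auto. apply lin_comp; auto. apply lin_comp; auto. }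
 pose proof (opnorm_bound H (full H) (fun x => vsub H (A (P x)) (P (A (P x)))) (subsp_fullH H)) as ob.
 specialize (ob (fun a y _ => lin_scal H _ a y LQ) (lin_zero H _ LQ)).
 assert (bd : exists K0, forall x, full H x -> hnorm H (vsub H (A (P x)) (P (A (P x)))) <= K0 * hnorm H x).
 { exists (2 * Rabs K). intros y _. eapply Rle_trans. apply hnorm_sub_le.
   pose proof (hK (P y)) as h1. pose proof (proj_contr H P (A (P y)) OP) as h2. pose proof (proj_contr H P y OP) as h3.
   pose proof (Rle_abs K). pose proof (hnorm_ge0 H (P y)). pose proof (hnorm_ge0 H y).
   assert (h4 : K * hnorm H (P y) <= Rabs K * hnorm H (P y)) by (apply Rmult_le_compat_r; auto).
   assert (h5 : Rabs K * hnorm H (P y) <= Rabs K * hnorm H y) by (apply Rmult_le_compat_l; auto; apply Rabs_pos).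
   lra. }
 specialize (ob bd x I). cbv beta in ob. unfold opnorm. rewrite (proj_fix H P x OP Rx) in ob. exact ob. Qed.

Lemma inv_shift (H : HilbertSpace) (M : H -> Prop) (A : H -> H) z : subsp H M -> invariant H M A -> invariant H M (shift H A z).
Proof. intros [M0 [Ma Ms]] IA x Mx. unfold shift, vsub. apply Ma; auto. rewrite vopp_scal. apply Ms, Ms; auto. Qed.

Lemma core (H : HilbertSpace) (Hcomplete : complete_space H) (T Ts : H -> H) K
  (LT : linH H T) (LTs : linH H Ts) (K0 : 0 <= K)
  (hK : forall x, hnorm H (T x) <= K * hnorm H x) (hKs : forall x, hnorm H (Ts x) <= K * hnorm H x)
  (adjT : forall x y, inner (T x) y = inner x (Ts y))
  (P : nat -> H -> H) (HP : filtration H P)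
  (Hq : Un_cv (fun n => opnorm H (fun x => vsub H (T (P n x)) (P n (T (P n x))))) 0
      \/ Un_cv (fun n => opnorm H (fun x => vsub H (Ts (P n x)) (P n (Ts (P n x))))) 0) :
  forall eps, eps > 0 -> exists N : nat, forall n : nat, (n >= N)%nat -> forall z : Cx,
    Rabs (Psi_on H (range H (P n)) (fun x => P n (T x)) z - Psi H T z) < eps.
Proof.
 intros eps he.
 destruct HP as [HPn [Hinc Hden]].
 assert (OP : forall n, orth_projection H (P n)) by (intro n; apply HPn).
 assert (LP : forall n, linH H (P n)) by (intro n; apply proj_lin, OP).
 assert (SMn : forall n, subsp H (range H (P n))) by (intro; apply proj_subsp, OP).
 assert (mono : forall n m y, (n <= m)%nat -> range H (P n) y -> range H (P m) y).
 { intros n m y hnm. induction hnm; auto. }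
 assert (hscal : forall n a y, range H (P n) y -> range H (P n) (vscal a y)) by (intros n a y h; apply (SMn n); auto).
 assert (hspan : forall n, exists k e, forall y, range H (P n) y -> span H k e y).
 { intro n. destruct (proj2 (HPn n)) as [k [e he']]. exists k, e. intros y hy. destruct (he' y hy) as [c hc]. exists c. rewrite hc. apply fold_lc. }
 assert (adjTs : forall x y, inner (Ts x) y = inner x (T y)).
 { intros x y. rewrite inner_conj, <- adjT, <- inner_conj; auto. }
 assert (LTn : forall n, linH H (fun x => P n (T x))) by (intro n; apply lin_comp; auto).
 assert (LTsn : forall n, linH H (fun x => P n (Ts x))) by (intro n; apply lin_comp; auto).
 assert (ITn : forall n, invariant H (range H (P n)) (fun x => P n (T x))) by (intros n x _; apply proj_in).
 assert (ITsn : forall n, invariant H (range H (P n)) (fun x => P n (Ts x))) by (intros n x _; apply proj_in).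
 assert (adjn : forall n u v, range H (P n) u -> range H (P n) v -> inner (P n (T u)) v = inner u (P n (Ts v))).
 { intros n; apply proj_adj_comp; auto. }
 assert (adjn' : forall n u v, range H (P n) u -> range H (P n) v -> inner (P n (Ts u)) v = inner u (P n (T v))).
 { intros n; apply proj_adj_comp; auto. }
 destruct (classic (exists x : H, unitv H x)) as [nt|tr].
 2:{ exists O; intros n _ z.
    assert (tr' : forall x : H, x = vzero).
    { intro x; apply NNPP; intro ne; apply tr; exists (vscal (RC (/ hnorm H x)) x); apply normalize; auto. }
    unfold Psi. rewrite (Psi_triv H (range H (P n))), (Psi_triv H (full H)); auto.
    rewrite Rminus_0_r, Rabs_R0; lra. apply subsp_fullH. }
 destruct nt as [x1 u1].
 assert (x1n : x1 <> vzero). { intro e0. unfold unitv in u1. rewrite e0, hnorm_zero in u1. lra. }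
 assert (ntH : nontriv H (full H)) by (exists x1; split; [exact I| exact x1n]).
 assert (qt : exists N3, (forall n, (n >= N3)%nat -> forall x, range H (P n) x -> hnorm H (vsub H (T x) (P n (T x))) <= eps / 2 * hnorm H x)
     \/ (forall n, (n >= N3)%nat -> forall x, range H (P n) x -> hnorm H (vsub H (Ts x) (P n (Ts x))) <= eps / 2 * hnorm H x)).
 { destruct Hq as [q|q]; destruct (q (eps / 2)) as [N3 hN3]; try lra; exists N3; [left|right];
   intros n hn x Rx; specialize (hN3 n hn); unfold Rdist in hN3; rewrite Rminus_0_r in hN3;
   pose proof (hnorm_ge0 H x).
   - pose proof (Rle_abs (opnorm H (fun x0 => vsub H (T (P n x0)) (P n (T (P n x0)))))).
     eapply Rle_trans. apply (qt_est H T (P n) K LT (OP n) hK x Rx). apply Rmult_le_compat_r; lra.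
   - pose proof (Rle_abs (opnorm H (fun x0 => vsub H (Ts (P n x0)) (P n (Ts (P n x0)))))).
     eapply Rle_trans. apply (qt_est H Ts (P n) K LTs (OP n) hKs x Rx). apply Rmult_le_compat_r; lra. }
 destruct qt as [N3 flag].
 destruct (approx_unit H (fun n => range H (P n)) hscal Hden x1 (1/2) u1) as [N0 [x0 [Mx0 [u0 _]]]]. lra.
 destruct (U_norm H T K LT hK K0 (fun n => range H (P n)) mono hscal Hden (eps / 4) ltac:(lra) (ex_intro _ x1 u1)) as [N1 hN1].
 destruct (U_norm H Ts K LTs hKs K0 (fun n => range H (P n)) mono hscal Hden (eps / 4) ltac:(lra) (ex_intro _ x1 u1)) as [N2 hN2].
 exists (max (max N0 N1) (max N2 N3)). intros n hn z.
 assert (hn0 : (n >= N0)%nat) by lia. assert (hn1 : (n >= N1)%nat) by lia.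
 assert (hn2 : (n >= N2)%nat) by lia. assert (hn3 : (n >= N3)%nat) by lia.
 destruct (hspan n) as [k [e hsp]].
 assert (ntn : nontriv H (range H (P n))).
 { exists x0. split. apply (mono N0); auto. intro e0. unfold unitv in u0. rewrite e0, hnorm_zero in u0. lra. }
 unfold Psi.
 set (Psin := Psi_on H (range H (P n)) (fun x => P n (T x)) z).
 set (Ps := Psi_on H (full H) T z).
 assert (Psin0 : 0 <= Psin) by (apply Psi_ge0, (SMn n)).
 assert (upTn : forall x, range H (P n) x -> unitv H x -> Psin <= hnorm H (shift H T z x)).
 { intros x Rx ux. pose proof (psi_self_low H (range H (P n)) (fun x => P n (T x)) z (SMn n) (LTn n) (ITn n) ntn x Rx) as h.
   unfold unitv in ux. rewrite ux, Rmult_1_r in h. fold Psin in h. rewrite (shift_proj H (P n) T z x (OP n) Rx) in h.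
   pose proof (proj_contr H (P n) (shift H T z x) (OP n)). lra. }
 assert (upTs : forall y, range H (P n) y -> unitv H y -> Psin <= hnorm H (shift H Ts (Cconj z) y)).
 { intros y Ry uy. pose proof (psi_adj_low H (range H (P n)) (fun x => P n (T x)) (fun x => P n (Ts x)) z (SMn n) (LTn n) (ITn n) ntn (adjn n) y Ry) as h.
   unfold unitv in uy. rewrite uy, Rmult_1_r in h. fold Psin in h. rewrite (shift_proj H (P n) Ts (Cconj z) y (OP n) Ry) in h.
   pose proof (proj_contr H (P n) (shift H Ts (Cconj z) y) (OP n)). lra. }
 assert (upper : Psin < Ps + 3 * eps / 4).
 { destruct (classic (exists Rv, bounded_inverse_on H (full H) (shift H T z) Rv)) as [inv|ninv].
   - destruct (Psi_facts H (full H) T z (subsp_fullH H) LT (fun x _ => I) ntH inv) as [_ [_ wit]].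
     destruct (wit (eps / 4)) as [x [_ [ux hx]]]. lra. fold Ps in hx.
     destruct (hN1 n hn1 z x ux) as [x' [Mx' [ux' hx']]]. pose proof (upTn x' Mx' ux'). lra.
   - assert (P0 : Ps = 0) by (apply Psi_noinv; auto). rewrite P0.
     assert (dis : (exists x, unitv H x /\ hnorm H (shift H T z x) < eps / 4) \/
                   (exists y, unitv H y /\ hnorm H (shift H Ts (Cconj z) y) < eps / 4)).
     { apply NNPP; intro hnn. apply ninv. apply not_or_and in hnn. destruct hnn as [h1 h2].
       assert (l1 : forall x, eps / 4 * hnorm H x <= hnorm H (shift H T z x)).
       { apply unit_low. apply shift_lin; auto. lra. intros x ux. apply Rnot_lt_le; intro l. apply h1. exists x; auto. }
       assert (l2 : forall x, eps / 4 * hnorm H x <= hnorm H (shift H Ts (Cconj z) x)).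
       { apply unit_low. apply shift_lin; auto. lra. intros x ux. apply Rnot_lt_le; intro l. apply h2. exists x; auto. }
       assert (bnd : forall x, hnorm H (shift H T z x) <= (K + Cabs z) * hnorm H x).
       { intro x. unfold shift. eapply Rle_trans. apply hnorm_sub_le. rewrite hnorm_scal. pose proof (hK x). lra. }
       assert (adjsh : forall x y, inner (shift H T z x) y = inner x (shift H Ts (Cconj z) y)).
       { intros x y. apply (shift_adj H (full H) T Ts z (fun u v _ _ => adjT u v) x y I I). }
       destruct (two_sided_inv H (shift H T z) (shift H Ts (Cconj z)) (eps / 4) (eps / 4) (K + Cabs z) Hcomplete
         (shift_lin H T z LT) ltac:(lra) ltac:(lra) l1 bnd l2 adjsh) as [Rv HR]. exists Rv. exact HR. }
     destruct dis as [[x [ux hx]]|[y [uy hy]]].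
     + destruct (hN1 n hn1 z x ux) as [x' [Mx' [ux' hx']]]. pose proof (upTn x' Mx' ux'). lra.
     + destruct (hN2 n hn2 (Cconj z) y uy) as [y' [My' [uy' hy']]]. pose proof (upTs y' My' uy'). lra. }
 assert (lower : Ps - eps / 2 <= Psin).
 { destruct (Rle_lt_dec Ps (eps / 2)) as [sm|lg]. lra.
   assert (lowT : forall x, Ps * hnorm H x <= hnorm H (shift H T z x)).
   { intro x. apply (psi_self_low H (full H) T z (subsp_fullH H) LT (fun x _ => I) ntH x I). }
   assert (lowTs : forall y, Ps * hnorm H y <= hnorm H (shift H Ts (Cconj z) y)).
   { intro y. apply (psi_adj_low H (full H) T Ts z (subsp_fullH H) LT (fun x _ => I) ntH (fun u v _ _ => adjT u v) y I). }
   set (c := Ps - eps / 2). assert (cp : 0 < c) by (unfold c; lra).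
   assert (lowTn : forall x, range H (P n) x -> c * hnorm H x <= hnorm H (shift H (fun x => P n (T x)) z x)).
   { destruct flag as [QT|QTs].
     - intros x Rx. pose proof (shift_proj_low H (P n) T z x) as e0. pose proof (hnorm_tri H (shift H (fun x => P n (T x)) z x) (vsub H (T x) (P n (T x)))) as tri.
       rewrite <- e0 in tri. pose proof (QT n hn3 x Rx). pose proof (lowT x). unfold c. lra.
     - assert (lowB : forall y, range H (P n) y -> c * hnorm H y <= hnorm H (shift H (fun x => P n (Ts x)) (Cconj z) y)).
       { intros y Ry. pose proof (shift_proj_low H (P n) Ts (Cconj z) y) as e0.
         pose proof (hnorm_tri H (shift H (fun x => P n (Ts x)) (Cconj z) y) (vsub H (Ts y) (P n (Ts y)))) as tri.
         rewrite <- e0 in tri. pose proof (QTs n hn3 y Ry). pose proof (lowTs y). unfold c. lra. }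
       assert (adjB : forall u v, range H (P n) u -> range H (P n) v ->
                inner (shift H (fun x => P n (Ts x)) (Cconj z) u) v = inner u (shift H (fun x => P n (T x)) z v)).
       { intros u v Ru Rv. rewrite (shift_adj H (range H (P n)) (fun x => P n (Ts x)) (fun x => P n (T x)) (Cconj z) (adjn' n) u v Ru Rv).
         rewrite Cconj_conj. auto. }
       apply (transfer_low H (range H (P n)) _ _ k e c (SMn n) (shift_lin H _ (Cconj z) (LTsn n))
                (inv_shift H _ _ (Cconj z) (SMn n) (ITsn n)) hsp cp lowB adjB). }
   apply (psi_lower_fd H (range H (P n)) (fun x => P n (T x)) z k e c (SMn n) (LTn n) (ITn n) hsp ntn cp lowTn). }
 apply Rabs_def1; lra.
Qed.

Theorem mainTheorem11 (H : HilbertSpace)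
  (Hcomplete : complete_space H) (Hsep : separable_space H)
  (T : H -> H) (HT : is_bounded_operator H T)
  (P : nat -> H -> H) (HP : filtration H P)
  (Hqt : Un_cv (fun n => opnorm H (fun x => vsub H (T (P n x)) (P n (T (P n x))))) 0
         \/ exists Tstar : H -> H, is_bounded_operator H Tstar /\ is_adjoint H T Tstar /\
              Un_cv (fun n => opnorm H
                       (fun x => vsub H (Tstar (P n x)) (P n (Tstar (P n x))))) 0) :
  forall eps, eps > 0 -> exists N : nat, forall n : nat, (n >= N)%nat -> forall z : Cx,
    Rabs (Psi_on H (range H (P n)) (fun x => P n (T x)) z - Psi H T z) < eps.
Proof.
 assert (gen : forall Ts, is_bounded_operator H Ts -> is_adjoint H T Ts ->
   Un_cv (fun n => opnorm H (fun x => vsub H (T (P n x)) (P n (T (P n x))))) 0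
      \/ Un_cv (fun n => opnorm H (fun x => vsub H (Ts (P n x)) (P n (Ts (P n x))))) 0 ->
   forall eps, eps > 0 -> exists N : nat, forall n : nat, (n >= N)%nat -> forall z : Cx,
    Rabs (Psi_on H (range H (P n)) (fun x => P n (T x)) z - Psi H T z) < eps).
 { intros Ts [LTs [KS hKS]] adj q. destruct HT as [LT [KT hKT]].
   set (K := Rabs KT + Rabs KS).
   assert (K0 : 0 <= K) by (unfold K; pose proof (Rabs_pos KT); pose proof (Rabs_pos KS); lra).
   assert (hK : forall x, hnorm H (T x) <= K * hnorm H x).
   { intro x. pose proof (hKT x). pose proof (hnorm_ge0 H x). pose proof (Rabs_pos KS).
     assert (KT * hnorm H x <= Rabs KT * hnorm H x) by (apply Rmult_le_compat_r; auto; apply Rle_abs).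
     assert (0 <= Rabs KS * hnorm H x) by (apply Rmult_le_pos; auto). unfold K. lra. }
   assert (hKs : forall x, hnorm H (Ts x) <= K * hnorm H x).
   { intro x. pose proof (hKS x). pose proof (hnorm_ge0 H x). pose proof (Rabs_pos KT).
     assert (KS * hnorm H x <= Rabs KS * hnorm H x) by (apply Rmult_le_compat_r; auto; apply Rle_abs).
     assert (0 <= Rabs KT * hnorm H x) by (apply Rmult_le_pos; auto). unfold K. lra. }
   apply (core H Hcomplete T Ts K LT LTs K0 hK hKs adj P HP q). }
 destruct Hqt as [q|[Ts [hTs [adj q]]]].
 - destruct (adjoint_exists H T Hcomplete HT) as [Ts [hTs adj]]. apply (gen Ts hTs adj). left; auto.
 - apply (gen Ts hTs adj). right; auto.
Qed.
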